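(* Fix a real number $c \ge 1$. For positive integers $n$ with $cn$ an integer, put $p=n$ and $q=cn$, and let $B_{p,q}$ be the random variable with $$\mathbb{P}(B_{p,q}=k) = \frac{\binom{q}{k}\binom{p+k}{k}}{\sum_{j=0}^{q}\binom{q}{j}\binom{p+j}{j}}, \qquad k=0,1,\dots,q.$$ Set $$m_{p,q} = \frac{q-p+\sqrt{p^2+6pq+q^2}}{4}, \qquad s_{p,q}^2 = \frac{q-p}{8}+\frac{(p+q)^2}{8\sqrt{p^2+6pq+q^2}}.$$ Then, as $n\to\infty$, $(B_{p,q}-m_{p,q})/s_{p,q}$ converges in distribution to a standard normal random variable. *)

(* Defs.v *)
From Stdlib Require Import Reals.
Open Scope R_scope.

Definition bweight (p q k : nat) : R := C q k * C (p + k) k.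

Definition bnorm (p q : nat) : R := sum_f_R0 (bweight p q) q.

Definition bprob (p q k : nat) : R := bweight p q k / bnorm p q.

Definition disc (p q : nat) : R :=
  INR p ^ 2 + 6 * INR p * INR q + INR q ^ 2.

Definition m_pq (p q : nat) : R := (INR q - INR p + sqrt (disc p q)) / 4.

Definition s2_pq (p q : nat) : R :=
  (INR q - INR p) / 8 + (INR p + INR q) ^ 2 / (8 * sqrt (disc p q)).

Definition s_pq (p q : nat) : R := sqrt (s2_pq p q).

Definition norm_cdf (p q : nat) (x : R) : R :=
  sum_f_R0 (fun k =>
    if Rle_dec ((INR k - m_pq p q) / s_pq p q) x then bprob p q k else 0) q.

(* Standard Gaussian density without normalizing constant. *)
Definition gauss (t : R) : R := exp (- (t ^ 2) / 2).

(* Main.v *)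
Require Import Defs.
From Coquelicot Require Import Coquelicot.
From Stdlib Require Import Reals Lra Psatz Lia ZArith.
Require Import Defs.
Open Scope R_scope.

Definition gf (t : R) : R := exp (- (t * t)).
Definition GI (x : R) : R := RInt gf 0 x.
Definition uu (x t : R) : R := exp (- (x * x) * (1 + t * t)) / (1 + t * t).
Definition II (x : R) : R := RInt (fun t => uu x t) 0 1.

Lemma gf_cont z : continuous gf z.
Proof. apply (@ex_derive_continuous R_AbsRing R_NormedModule); unfold gf; auto_derive; auto. Qed.

Lemma gf_exRInt a b : ex_RInt gf a b.
Proof. apply (@ex_RInt_continuous R_CompleteNormedModule); intros; apply gf_cont. Qed.

Lemma GI_deriv x : is_derive GI x (gf x).
Proof.
  unfold GI. apply (is_derive_RInt gf (fun b => RInt gf 0 b) 0 x).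
  - apply filter_forall; intros b. apply (@RInt_correct R_CompleteNormedModule), gf_exRInt.
  - apply gf_cont.
Qed.

Lemma tt_pos t : 0 < 1 + t * t.
Proof. nra. Qed.

Lemma uu_deriv x t : is_derive (fun z => uu z t) x (- 2 * x * exp (- (x * x) * (1 + t * t))).
Proof.
  unfold uu. auto_derive. generalize (tt_pos t); lra.
  field. generalize (tt_pos t); lra.
Qed.

Lemma II_deriv x : is_derive II x (RInt (fun t => - 2 * x * exp (- (x * x) * (1 + t * t))) 0 1).
Proof.
  unfold II.
  assert (E : RInt (fun t => - 2 * x * exp (- (x * x) * (1 + t * t))) 0 1 =
              RInt (fun t => Derive (fun u => uu u t) x) 0 1).
  { apply RInt_ext; intros; symmetry; apply is_derive_unique, uu_deriv. }
  rewrite E.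
  apply (is_derive_RInt_param uu 0 1 x).
  - apply filter_forall; intros y t _. eexists; apply uu_deriv.
  - intros t _.
    apply continuity_2d_pt_ext with (f := fun u v => - 2 * u * exp (- (u * u) * (1 + v * v))).
    { intros; symmetry; apply is_derive_unique, uu_deriv. }
    apply continuity_2d_pt_mult.
    + apply continuity_2d_pt_mult. apply continuity_2d_pt_const. apply continuity_2d_pt_id1.
    + apply continuity_1d_2d_pt_comp with (f := exp) (g := fun u v => - (u * u) * (1 + v * v)).
      * apply derivable_continuous_pt. apply derivable_pt_exp.
      * apply continuity_2d_pt_mult.
        apply continuity_2d_pt_opp, continuity_2d_pt_mult; apply continuity_2d_pt_id1.
        apply continuity_2d_pt_plus. apply continuity_2d_pt_const.
        apply continuity_2d_pt_mult; apply continuity_2d_pt_id2.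
  - apply filter_forall; intros y. apply (@ex_RInt_continuous R_CompleteNormedModule); intros z _.
    apply (@ex_derive_continuous R_AbsRing R_NormedModule). unfold uu; auto_derive. generalize (tt_pos z); lra.
Qed.

Lemma II_deriv_val x :
  RInt (fun t => - 2 * x * exp (- (x * x) * (1 + t * t))) 0 1 = - 2 * exp (- (x * x)) * GI x.
Proof.
  transitivity (RInt (fun t => (- 2 * exp (- (x * x))) * (scal x (gf (x * t + 0)))) 0 1).
  { apply RInt_ext; intros t _. unfold gf, scal; simpl; unfold mult; simpl.
    replace (- (x * x) * (1 + t * t)) with (- (x*x) + - ((x * t + 0) * (x * t + 0))) by ring.
    rewrite exp_plus. ring. }
  rewrite (RInt_scal (V:=R_CompleteNormedModule)).
  2:{ apply (@ex_RInt_continuous R_CompleteNormedModule). intros z _.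
      apply (@ex_derive_continuous R_AbsRing R_NormedModule). unfold gf, scal; simpl; unfold mult; simpl. auto_derive; auto. }
  rewrite (RInt_comp_lin (V:=R_CompleteNormedModule)).
  2:{ apply gf_exRInt. }
  unfold GI, scal; simpl; unfold mult; simpl. repeat f_equal; ring.
Qed.

Definition hh x := GI x * GI x + II x.

Lemma hh_deriv x : is_derive hh x 0.
Proof.
  unfold hh.
  evar (d : R).
  assert (H : is_derive (fun y => GI y * GI y + II y) x d).
  { apply (@is_derive_plus R_AbsRing R_NormedModule).
    apply (@is_derive_mult R_AbsRing). apply GI_deriv. apply GI_deriv.
    intros; apply Rmult_comm.
    apply II_deriv. }
  unfold d in H. rewrite II_deriv_val in H.
  replace 0 with (plus (plus (mult (gf x) (GI x)) (mult (GI x) (gf x)))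
        (-2 * exp (- (x * x)) * GI x)). exact H.
  unfold plus, mult; simpl; unfold gf; ring.
Qed.

Lemma II0 : II 0 = PI / 4.
Proof.
  unfold II.
  assert (H : is_RInt (fun t => uu 0 t) 0 1 (minus (atan 1) (atan 0))).
  { apply (is_RInt_derive (V:=R_CompleteNormedModule) atan).
    - intros t _. apply is_derive_Reals. unfold uu.
      replace (exp (- (0 * 0) * (1 + t * t)) / (1 + t * t)) with (/ (1 + t ^ 2)).
      apply derivable_pt_lim_atan.
      replace (- (0 * 0) * (1 + t * t)) with 0 by ring. rewrite exp_0. field.
      generalize (tt_pos t). lra.
    - intros t _. apply (@ex_derive_continuous R_AbsRing R_NormedModule). unfold uu.
      auto_derive. generalize (tt_pos t). lra. }
  rewrite (is_RInt_unique _ _ _ _ H). unfold minus, plus, opp; simpl.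
  rewrite atan_1, atan_0. ring.
Qed.

Lemma hh_const x : hh x = PI / 4.
Proof.
  rewrite <- II0.
  assert (hh 0 = II 0) by (unfold hh, GI; rewrite RInt_point; unfold zero; simpl; ring).
  rewrite <- H.
  destruct (Req_dec x 0) as [->|Hx]. reflexivity.
  destruct (MVT_abs hh (fun _ => 0) 0 x) as [c [Hc _]].
  { intros; apply is_derive_Reals, hh_deriv. }
  rewrite Rabs_R0, Rmult_0_l in Hc.
  apply Rabs_eq_0 in Hc. lra.
Qed.

Lemma uu_cont x t : continuous (uu x) t.
Proof. apply (@ex_derive_continuous R_AbsRing R_NormedModule). unfold uu.
  auto_derive. generalize (tt_pos t). lra. Qed.

Lemma exp_le x y : x <= y -> exp x <= exp y.
Proof. intros H; destruct (Rle_lt_or_eq_dec _ _ H) as [H'|H']. apply Rlt_le, exp_increasing, H'. rewrite H'; lra. Qed.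

Lemma uu_bounds x t : 0 <= uu x t <= exp (- (x * x)).
Proof.
  unfold uu. generalize (tt_pos t); intro Ht. split.
  - apply Rlt_le, Rdiv_lt_0_compat; [apply exp_pos|lra].
  - apply Rle_trans with (exp (- (x * x) * (1 + t * t))).
    + rewrite <- (Rmult_1_r (exp _)) at 2. unfold Rdiv. apply Rmult_le_compat_l.
      apply Rlt_le, exp_pos. rewrite <- Rinv_1. apply Rinv_le_contravar; nra.
    + apply exp_le. nra.
Qed.

Lemma II_bounds x : 0 <= II x <= exp (- (x * x)).
Proof.
  unfold II. assert (EX : ex_RInt (fun t => uu x t) 0 1).
  { apply (@ex_RInt_continuous R_CompleteNormedModule). intros; apply uu_cont. }
  split.
  - apply RInt_ge_0. lra. exact EX. intros; apply uu_bounds.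
  - apply Rle_trans with (RInt (fun _ => exp (- (x * x))) 0 1).
    apply RInt_le. lra. exact EX. apply ex_RInt_const. intros; apply uu_bounds.
    rewrite RInt_const. unfold scal; simpl; unfold mult; simpl. lra.
Qed.

Lemma GI_ge0 x : 0 <= x -> 0 <= GI x.
Proof. intros. unfold GI. apply RInt_ge_0. exact H. apply gf_exRInt.
  intros; unfold gf; apply Rlt_le, exp_pos. Qed.


Lemma GI_lim x : 0 <= x -> Rabs (GI x - sqrt PI / 2) <= 2 * exp (- (x * x)).
Proof.
  intros Hx.
  assert (E : GI x * GI x = PI / 4 - II x) by (generalize (hh_const x); unfold hh; lra).
  assert (HP : sqrt PI * sqrt PI = PI) by (apply sqrt_sqrt; generalize PI_RGT_0; lra).
  assert (HS : 1 < sqrt PI).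
  { rewrite <- sqrt_1. apply sqrt_lt_1_alt. generalize PI2_1; lra. }
  generalize (GI_ge0 x Hx) (II_bounds x); intros HG HI.
  assert (Ef : (GI x - sqrt PI / 2) * (GI x + sqrt PI / 2) = - II x) by nra.
  assert (0 < GI x + sqrt PI / 2) by lra.
  rewrite Rabs_left1.
  2:{ destruct (Rle_or_lt (GI x - sqrt PI / 2) 0). auto. nra. }
  apply Rle_trans with (II x / (GI x + sqrt PI / 2)).
  - right. field_simplify_eq. nra. lra.
  - apply Rle_trans with (II x / (1/2)).
    + unfold Rdiv. apply Rmult_le_compat_l. lra. apply Rinv_le_contravar; lra.
    + lra.
Qed.

Lemma gauss_cont z : continuous gauss z.
Proof. apply (@ex_derive_continuous R_AbsRing R_NormedModule). unfold gauss. auto_derive. auto. Qed.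

Lemma gauss_exRInt a b : ex_RInt gauss a b.
Proof. apply (@ex_RInt_continuous R_CompleteNormedModule). intros; apply gauss_cont. Qed.

Lemma gauss_pos t : 0 < gauss t.
Proof. apply exp_pos. Qed.

Lemma gauss_le1 t : gauss t <= 1.
Proof. unfold gauss. rewrite <- exp_0. apply exp_le. nra. Qed.

Lemma gauss_even t : gauss (- t) = gauss t.
Proof. unfold gauss. replace ((- t) ^ 2) with (t ^ 2) by ring. reflexivity. Qed.

Lemma sqrt2_sq : sqrt 2 * sqrt 2 = 2.
Proof. apply sqrt_sqrt; lra. Qed.

Lemma Ig_GI T : RInt gauss 0 T = sqrt 2 * GI (T / sqrt 2).
Proof.
  generalize Rlt_sqrt2_0 sqrt2_sq; intros H0 H2.
  transitivity (sqrt 2 * RInt (fun y => scal (/ sqrt 2) (gf (/ sqrt 2 * y + 0))) 0 T).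
  - rewrite <- (RInt_scal (V:=R_CompleteNormedModule)).
    2:{ apply (@ex_RInt_continuous R_CompleteNormedModule). intros z _.
      apply (@ex_derive_continuous R_AbsRing R_NormedModule). unfold gf, scal; simpl; unfold mult; simpl. auto_derive; auto. }
    apply RInt_ext; intros y _.
    assert (E : gf (/ sqrt 2 * y + 0) = gauss y).
    { unfold gf, gauss. f_equal.
      replace ((/ sqrt 2 * y + 0) * (/ sqrt 2 * y + 0)) with (y * y * (/ (sqrt 2 * sqrt 2))) by (field; lra).
      rewrite H2. field. }
    unfold scal; simpl; unfold mult; simpl. rewrite E. field. lra.
  - rewrite (RInt_comp_lin (V:=R_CompleteNormedModule)). 2: apply gf_exRInt.
    unfold GI. f_equal. f_equal; field; lra.
Qed.

Lemma Ig_lim T : 0 <= T -> Rabs (RInt gauss 0 T - sqrt (2 * PI) / 2) <= 3 * gauss T.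
Proof.
  intros HT. generalize Rlt_sqrt2_0 sqrt2_sq; intros H0 H2.
  rewrite Ig_GI. rewrite sqrt_mult by (generalize PI_RGT_0; lra).
  replace (sqrt 2 * GI (T / sqrt 2) - sqrt 2 * sqrt PI / 2) with (sqrt 2 * (GI (T / sqrt 2) - sqrt PI / 2)) by (unfold Rdiv; ring).
  rewrite Rabs_mult, (Rabs_pos_eq (sqrt 2)) by lra.
  assert (0 <= T / sqrt 2) by (apply Rdiv_le_0_compat; lra).
  generalize (GI_lim _ H); intro HL.
  replace (exp (- (T / sqrt 2 * (T / sqrt 2)))) with (gauss T) in HL.
  2:{ unfold gauss. f_equal.
      replace (T / sqrt 2 * (T / sqrt 2)) with (T * T * / (sqrt 2 * sqrt 2)) by (field; lra).
      rewrite H2. field. }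
  assert (sqrt 2 < 1.5) by nra.
  generalize (gauss_pos T). nra.
Qed.

Lemma Ig_sym T : RInt gauss (- T) 0 = RInt gauss 0 T.
Proof.
  assert (E := RInt_comp_lin (V:=R_CompleteNormedModule) gauss (-1) 0 0 T (gauss_exRInt _ _)).
  replace (-1 * 0 + 0) with 0 in E by ring. replace (-1 * T + 0) with (-T) in E by ring.
  rewrite <- (opp_RInt_swap (V:=R_CompleteNormedModule)) by apply gauss_exRInt.
  rewrite <- E.
  rewrite (RInt_ext (V:=R_CompleteNormedModule) _ (fun y => opp (gauss y))).
  2:{ intros; unfold scal, opp; simpl; unfold mult; simpl.
      replace (-1 * x + 0) with (- x) by ring. rewrite gauss_even. ring. }
  rewrite (RInt_opp (V:=R_CompleteNormedModule)) by apply gauss_exRInt.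
  unfold opp; simpl. ring.
Qed.

Lemma gauss_deriv t : derivable_pt_lim gauss t (- t * gauss t).
Proof. apply is_derive_Reals. unfold gauss. auto_derive. auto. replace (- (t * (t * 1)) * / 2) with (- t ^ 2 / 2) by (simpl; field). field. Qed.

Lemma t_gauss_le1 t : Rabs (- t * gauss t) <= 1.
Proof.
  unfold gauss. rewrite Rabs_mult, (Rabs_pos_eq (exp _)) by (apply Rlt_le, exp_pos).
  rewrite Rabs_Ropp.
  replace (- t ^ 2 / 2) with (- (t ^ 2 / 2)) by field. rewrite exp_Ropp.
  generalize (exp_ineq1_le (t ^ 2 / 2)) (exp_pos (t ^ 2 / 2)); intros H1 H2.
  apply Rmult_le_reg_r with (exp (t ^ 2 / 2)). auto.
  rewrite Rmult_assoc, Rinv_l by lra. rewrite Rmult_1_r, Rmult_1_l.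
  assert (Rabs t <= 1 + t ^ 2 / 2).
  { destruct (Rabs_pos t). generalize (Rsqr_abs t). unfold Rsqr. simpl. intros E.
    nra. nra. }
  lra.
Qed.

Lemma gauss_lip a b : Rabs (gauss a - gauss b) <= Rabs (a - b).
Proof.
  destruct (MVT_abs gauss (fun t => - t * gauss t) b a) as [c [Hc _]].
  { intros; apply gauss_deriv. }
  rewrite Hc. rewrite <- Rmult_1_l. apply Rmult_le_compat_r. apply Rabs_pos. apply t_gauss_le1.
Qed.

Lemma RInt_gauss_bounds a b : a <= b -> 0 <= RInt gauss a b <= b - a.
Proof.
  intros H. split.
  - apply RInt_ge_0; auto. apply gauss_exRInt. intros; apply Rlt_le, gauss_pos.
  - apply Rle_trans with (RInt (fun _ => 1) a b).
    apply RInt_le; auto. apply gauss_exRInt. apply ex_RInt_const. intros; apply gauss_le1.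
    rewrite RInt_const. unfold scal; simpl; unfold mult; simpl. lra.
Qed.

Lemma RInt_gauss_cell a h : 0 <= h -> Rabs (RInt gauss a (a + h) - h * gauss a) <= h * h.
Proof.
  intros Hh.
  replace (h * gauss a) with (RInt (fun _ => gauss a) a (a + h)).
  2:{ rewrite RInt_const. unfold scal; simpl; unfold mult; simpl. ring. }
  rewrite <- (RInt_minus (V:=R_CompleteNormedModule)) by (apply gauss_exRInt || apply ex_RInt_const).
  replace (h * h) with ((a + h - a) * h) by ring.
  apply abs_RInt_le_const. lra.
  apply (@ex_RInt_minus R_NormedModule). apply gauss_exRInt. apply ex_RInt_const.
  intros t Ht. unfold minus, plus, opp; simpl.
  apply Rle_trans with (Rabs (t - a)). apply gauss_lip.
  rewrite Rabs_pos_eq; lra.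
Qed.

Ltac dec_tac := repeat match goal with
  | |- context [Rle_dec ?a ?b] => destruct (Rle_dec a b)
  | |- context [Rlt_dec ?a ?b] => destruct (Rlt_dec a b) end.

Definition tk (m s : R) (k : nat) : R := (INR k - m) / s.
Definition cl (a b t : R) : R := Rmax a (Rmin b t).
Definition win (L U k : nat) : bool := andb (Nat.leb L k) (Nat.ltb k U).

Lemma tk_S m s k : 0 < s -> tk m s (S k) = tk m s k + 1 / s.
Proof. intros. unfold tk. rewrite S_INR. field. lra. Qed.

Lemma tk_le m s i j : 0 < s -> (i <= j)%nat -> tk m s i <= tk m s j.
Proof. intros. unfold tk, Rdiv. apply Rmult_le_compat_r. apply Rlt_le, Rinv_0_lt_compat; auto.
  apply le_INR in H0. lra. Qed.

Lemma tk_lt m s i j : 0 < s -> (i < j)%nat -> tk m s i < tk m s j.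
Proof. intros. unfold tk, Rdiv. apply Rmult_lt_compat_r. apply Rinv_0_lt_compat; auto.
  apply lt_INR in H0. lra. Qed.

Lemma telescope f Q :
  sum_f_R0 (fun k => RInt gauss (f k) (f (S k))) Q = RInt gauss (f O) (f (S Q)).
Proof.
  induction Q. reflexivity.
  simpl sum_f_R0. rewrite IHQ.
  rewrite <- (RInt_Chasles (V:=R_CompleteNormedModule) gauss (f O) (f (S Q)) (f (S (S Q))))
    by apply gauss_exRInt. reflexivity.
Qed.

Lemma min_step U Q : INR (Nat.min U (S (S Q))) = INR (Nat.min U (S Q)) + (if Nat.ltb (S Q) U then 1 else 0).
Proof.
  destruct (Nat.ltb_spec (S Q) U).
  - rewrite Nat.min_r by lia. rewrite Nat.min_r by lia. rewrite (S_INR (S Q)). ring.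
  - rewrite Nat.min_l by lia. rewrite Nat.min_l by lia. ring.
Qed.

Lemma win_sum c L U Q : (L <= U)%nat ->
  sum_f_R0 (fun k => if win L U k then c else 0) Q = c * (INR (Nat.min U (S Q)) - INR (Nat.min L (S Q))).
Proof.
  intros HLU. induction Q as [|Q IH].
  - unfold sum_f_R0, win.
    destruct L as [|L]; destruct U as [|U]; try lia.
    + replace (Nat.min 0 1) with 0%nat by lia. simpl; ring.
    + replace (Nat.min (S U) 1) with 1%nat by lia. replace (Nat.min 0 1) with 0%nat by lia. simpl; ring.
    + replace (Nat.min (S U) 1) with 1%nat by lia. replace (Nat.min (S L) 1) with 1%nat by lia.
      simpl; ring.
  - simpl sum_f_R0. rewrite IH, !min_step. unfold win.
    destruct (Nat.leb_spec L (S Q)); destruct (Nat.ltb_spec (S Q) U);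
      destruct (Nat.ltb_spec (S Q) L); simpl; try lia; ring.
Qed.

Lemma win_sum_le c L U Q : 0 <= c -> (L <= U)%nat ->
  sum_f_R0 (fun k => if win L U k then c else 0) Q <= c * INR (U - L).
Proof.
  intros Hc HLU. rewrite win_sum by auto. apply Rmult_le_compat_l; auto.
  rewrite <- minus_INR by lia. apply le_INR. lia.
Qed.

Definition bnd (m s b : R) (k : nat) : R :=
  if Rle_dec (tk m s k) b then (if Rlt_dec b (tk m s (S k)) then 1 else 0) else 0.

Lemma bnd_sum m s b Q : 0 < s ->
  sum_f_R0 (bnd m s b) Q =
  if Rle_dec (tk m s O) b then (if Rlt_dec b (tk m s (S Q)) then 1 else 0) else 0.
Proof.
  intros Hs. induction Q. reflexivity.
  simpl sum_f_R0. rewrite IHQ. unfold bnd.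
  assert (tk m s (S Q) < tk m s (S (S Q))) by (apply tk_lt; auto).
  assert (tk m s O <= tk m s (S Q)) by (apply tk_le; [auto|lia]).
  destruct (Rle_dec (tk m s 0) b); destruct (Rlt_dec b (tk m s (S Q)));
  destruct (Rle_dec (tk m s (S Q)) b); destruct (Rlt_dec b (tk m s (S (S Q)))); lra.
Qed.

Lemma bnd_sum_le m s b Q : 0 < s -> sum_f_R0 (bnd m s b) Q <= 1.
Proof. intros. rewrite bnd_sum by auto.
  dec_tac; nra. Qed.

Definition rterm (m s b : R) (L U : nat) (k : nat) : R :=
  if win L U k then (if Rle_dec (tk m s k) b then gauss (tk m s k) / s else 0) else 0.

Lemma cell m s b L U k : 0 < s -> (L <= U)%nat -> tk m s L <= b <= tk m s U ->
  Rabs (rterm m s b L U k - RInt gauss (cl (tk m s L) b (tk m s k)) (cl (tk m s L) b (tk m s (S k))))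
  <= (if win L U k then 1 / (s * s) else 0) + bnd m s b k * / s.
Proof.
  intros Hs HLU Hb. unfold rterm, bnd, cl.
  assert (HS := tk_S m s k Hs).
  assert (0 < 1 / s) by (apply Rdiv_lt_0_compat; lra).
  assert (0 <= 1 / (s * s)) by (apply Rlt_le, Rdiv_lt_0_compat; nra).
  assert (0 <= / s) by (apply Rlt_le, Rinv_0_lt_compat; lra).
  unfold win. destruct (Nat.leb_spec L k) as [HL|HL]; destruct (Nat.ltb_spec k U) as [HU|HU]; simpl.
  -
    assert (tk m s L <= tk m s k) by (apply tk_le; auto).
    destruct (Rle_dec (tk m s k) b) as [Hk|Hk].
    + rewrite (Rmin_right b (tk m s k)) by lra. rewrite (Rmax_right _ (tk m s k)) by lra.
      destruct (Rlt_dec b (tk m s (S k))) as [Hk1|Hk1].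
      * rewrite (Rmin_left b) by lra. rewrite (Rmax_right _ b) by lra.
        assert (HI := RInt_gauss_bounds (tk m s k) b Hk).
        generalize (gauss_pos (tk m s k)) (gauss_le1 (tk m s k)); intros.
        assert (gauss (tk m s k) / s <= 1 / s) by (unfold Rdiv; apply Rmult_le_compat_r; [apply Rlt_le, Rinv_0_lt_compat|]; lra).
        assert (0 <= gauss (tk m s k) / s) by (apply Rlt_le, Rdiv_lt_0_compat; lra).
        apply Rabs_le. lra.
      * rewrite (Rmin_right b) by lra. rewrite (Rmax_right _ (tk m s (S k))) by lra.
        rewrite HS. replace (gauss (tk m s k) / s) with (1 / s * gauss (tk m s k)) by (field; lra).
        rewrite Rabs_minus_sym. eapply Rle_trans. apply RInt_gauss_cell. lra.
        assert (1 / s * (1 / s) = 1 / (s * s)) by (field; lra).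
        assert (0 <= / s) by (apply Rlt_le, Rinv_0_lt_compat; lra).
        dec_tac; nra.
    + rewrite (Rmin_left b (tk m s k)) by lra.
      rewrite (Rmin_left b (tk m s (S k))) by lra. rewrite RInt_point.
      unfold zero; simpl. rewrite Rminus_0_r, Rabs_R0. lra.
  -
    assert (tk m s U <= tk m s k) by (apply tk_le; auto).
    assert (tk m s U <= tk m s (S k)) by (apply tk_le; [auto|lia]).
    rewrite (Rmin_left b (tk m s k)) by lra.
    rewrite (Rmin_left b (tk m s (S k))) by lra. rewrite RInt_point.
    unfold zero; simpl. rewrite Rminus_0_r, Rabs_R0.
    dec_tac; nra.
  -
    assert (tk m s k <= tk m s L) by (apply tk_le; [auto|lia]).
    assert (tk m s (S k) <= tk m s L) by (apply tk_le; [auto|lia]).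
    rewrite (Rmax_left _ (Rmin b (tk m s k))) by (apply Rle_trans with (tk m s k); [apply Rmin_r|lra]).
    rewrite (Rmax_left _ (Rmin b (tk m s (S k)))) by (apply Rle_trans with (tk m s (S k)); [apply Rmin_r|lra]).
    rewrite RInt_point.
    unfold zero; simpl. rewrite Rminus_0_r, Rabs_R0.
    dec_tac; nra.
  - lia.
Qed.

Lemma riemann m s b L U Q : 0 < s -> (L <= U)%nat -> (U <= Q)%nat -> tk m s L <= b <= tk m s U ->
  Rabs (sum_f_R0 (rterm m s b L U) Q - RInt gauss (tk m s L) b) <= INR (U - L) / (s * s) + 1 / s.
Proof.
  intros Hs HLU HUQ Hb.
  assert (E : RInt gauss (tk m s L) b =
     sum_f_R0 (fun k => RInt gauss (cl (tk m s L) b (tk m s k)) (cl (tk m s L) b (tk m s (S k)))) Q).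
  { rewrite (telescope (fun k => cl (tk m s L) b (tk m s k))).
    unfold cl. assert (tk m s O <= tk m s L) by (apply tk_le; [auto|lia]).
    assert (tk m s U <= tk m s (S Q)) by (apply tk_le; [auto|lia]).
    rewrite (Rmin_right b (tk m s O)) by lra. rewrite (Rmax_left _ (tk m s O)) by lra.
    rewrite (Rmin_left b) by lra. rewrite Rmax_right by lra. reflexivity. }
  rewrite E, <- minus_sum.
  eapply Rle_trans. apply Rsum_abs.
  eapply Rle_trans. apply sum_Rle. intros k _. apply cell; auto.
  rewrite plus_sum.
  apply Rplus_le_compat.
  - eapply Rle_trans. apply win_sum_le. apply Rlt_le, Rdiv_lt_0_compat; nra. auto.
    right. field. lra.
  - 
    rewrite <- scal_sum. unfold Rdiv. rewrite Rmult_1_l.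
    rewrite <- (Rmult_1_r (/ s)) at 2. apply Rmult_le_compat_l.
    apply Rlt_le, Rinv_0_lt_compat; auto. apply bnd_sum_le; auto.
Qed.

Lemma C_pos n k : (k <= n)%nat -> 0 < Binomial.C n k.
Proof. intros. unfold C. apply Rdiv_lt_0_compat. apply INR_fact_lt_0.
  apply Rmult_lt_0_compat; apply INR_fact_lt_0. Qed.

Lemma w_pos p q k : (k <= q)%nat -> 0 < bweight p q k.
Proof. intros. unfold bweight. apply Rmult_lt_0_compat; apply C_pos; lia. Qed.

Definition rr (p q : nat) (k : nat) : R :=
  (INR q - INR k) * (INR p + INR k + 1) / ((INR k + 1) * (INR k + 1)).

Lemma C2_step p k : Binomial.C (p + S k) (S k) = (INR p + INR k + 1) / (INR k + 1) * Binomial.C (p + k) k.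
Proof.
  unfold C. replace (p + S k - S k)%nat with p by lia. replace (p + k - k)%nat with p by lia.
  replace (p + S k)%nat with (S (p + k)) by lia.
  rewrite !fact_simpl, !mult_INR, !S_INR, plus_INR.
  generalize (INR_fact_lt_0 (p + k)) (INR_fact_lt_0 k) (INR_fact_lt_0 p) (pos_INR k) (pos_INR p); intros.
  field. repeat split; lra.
Qed.

Lemma w_step p q k : (k < q)%nat -> bweight p q (S k) = bweight p q k * rr p q k.
Proof.
  intros H. unfold bweight, rr.
  rewrite pascal_step3 by auto. rewrite C2_step. rewrite minus_INR by lia. rewrite S_INR.
  generalize (pos_INR k); intros. field. lra.
Qed.

Lemma rr_pos p q k : (k < q)%nat -> 0 < rr p q k.
Proof. intros. unfold rr. apply lt_INR in H. generalize (pos_INR k) (pos_INR p); intros.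
  apply Rdiv_lt_0_compat; nra. Qed.

Lemma div_le x y u v : 0 < y -> 0 < v -> x * v <= u * y -> x / y <= u / v.
Proof. intros. unfold Rdiv. apply Rmult_le_reg_r with (y * v). nra.
  replace (x * / y * (y * v)) with (x * v) by (field; lra).
  replace (u * / v * (y * v)) with (u * y) by (field; lra). auto. Qed.

Lemma rr_decr1 p q k : (S k < q)%nat -> rr p q (S k) <= rr p q k.
Proof.
  intros Hkq. apply lt_INR in Hkq. rewrite S_INR in Hkq.
  unfold rr. rewrite S_INR. generalize (pos_INR k) (pos_INR p); intros Hk Hp.
  set (a := INR k + 1) in *. replace (INR k + 1 + 1) with (a + 1) by (unfold a; ring).
  replace (INR q - (INR k + 1)) with (INR q - a) by (unfold a; ring).
  replace (INR p + (INR k + 1) + 1) with (INR p + a + 1) by (unfold a; ring).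
  replace (INR p + INR k + 1) with (INR p + a) by (unfold a; ring).
  replace (INR q - INR k) with (INR q - a + 1) by (unfold a; ring).
  assert (Ha : 1 <= a) by (unfold a; lra). clearbody a.
  set (X := INR q - a). assert (HX : 0 <= X) by (unfold X; lra). clearbody X.
  set (P := INR p) in *. clearbody P.
  apply div_le. nra. nra.
  assert (H1 : (P + a + 1) * (a * a) <= (P + a) * ((a + 1) * (a + 1))) by nra.
  assert (H2 : X * ((P + a + 1) * (a * a)) <= X * ((P + a) * ((a + 1) * (a + 1)))) by (apply Rmult_le_compat_l; auto).
  assert (0 <= (P + a) * ((a + 1) * (a + 1))) by nra.
  nra.
Qed.

Lemma rr_decr p q i j : (i <= j)%nat -> (j < q)%nat -> rr p q j <= rr p q i.
Proof.
  intros Hij Hjq. induction j.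
  - replace i with 0%nat by lia. lra.
  - destruct (Nat.eq_dec i (S j)) as [->|Hne]. lra.
    apply Rle_trans with (rr p q j). apply rr_decr1; lia. apply IHj; lia.
Qed.

Lemma C_pos_all n k : 0 < Binomial.C n k.
Proof. unfold Binomial.C. apply Rdiv_lt_0_compat. apply INR_fact_lt_0.
  apply Rmult_lt_0_compat; apply INR_fact_lt_0. Qed.

Lemma w_pos_all p q k : 0 < bweight p q k.
Proof. unfold bweight. apply Rmult_lt_0_compat; apply C_pos_all. Qed.

Section Params.
Variables p q : nat.
Hypothesis Hp : 1 <= INR p.
Hypothesis Hpq : INR p <= INR q.

Lemma disc_pos : 0 < disc p q.
Proof. unfold disc. nra. Qed.

Lemma rt_sq : sqrt (disc p q) * sqrt (disc p q) = disc p q.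
Proof. apply sqrt_sqrt. generalize disc_pos; lra. Qed.

Lemma rt_bounds : INR p + INR q <= sqrt (disc p q) <= 3 / 2 * (INR p + INR q).
Proof.
  generalize rt_sq (sqrt_pos (disc p q)); intros H1 H2. unfold disc in *.
  set (r := sqrt _) in *. split; nra.
Qed.

Lemma m_AB : (INR q - m_pq p q) * (INR p + m_pq p q) = m_pq p q * m_pq p q.
Proof.
  generalize rt_sq; intros H1. unfold m_pq, disc in *.
  set (r := sqrt _) in *. nra.
Qed.

Lemma m_lb : INR q / 2 <= m_pq p q.
Proof. generalize rt_bounds; intros. unfold m_pq. lra. Qed.

Lemma A_lb : INR q / 4 <= INR q - m_pq p q.
Proof. generalize rt_bounds; intros. unfold m_pq. lra. Qed.

Lemma s2_eq : s2_pq p q = m_pq p q * m_pq p q / sqrt (disc p q).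
Proof.
  generalize rt_sq rt_bounds; intros H1 H2. unfold s2_pq, m_pq, disc in *.
  set (r := sqrt _) in *.
  field_simplify_eq. 2: lra. nra.
Qed.

Lemma s2_bounds : INR q / 12 <= s2_pq p q <= INR q / 4.
Proof.
  generalize rt_bounds; intros [H1 H2]. unfold s2_pq.
  set (r := sqrt (disc p q)) in *.
  assert (0 < r) by lra.
  assert ((INR p + INR q) ^ 2 / (8 * r) <= (INR p + INR q) / 8).
  { apply div_le. lra. lra. nra. }
  assert ((INR p + INR q) / 12 <= (INR p + INR q) ^ 2 / (8 * r)).
  { apply div_le. lra. lra. nra. }
  lra.
Qed.

Lemma inv_s2 : / s2_pq p q = / (INR q - m_pq p q) - / (INR p + m_pq p q) + 2 / m_pq p q.
Proof.
  generalize m_AB s2_eq m_lb A_lb rt_bounds; intros E1 E2 H1 H2 H3.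
  rewrite E2.
  assert (E3 : 4 * m_pq p q = INR q - INR p + sqrt (disc p q)) by (unfold m_pq; field).
  set (m := m_pq p q) in *. set (r := sqrt (disc p q)) in *.
  assert (0 < m) by lra. assert (0 < INR q - m) by lra. assert (0 < INR p + m) by lra.
  field_simplify_eq; try lra. nra.
Qed.

Lemma s_sq : s_pq p q * s_pq p q = s2_pq p q.
Proof. unfold s_pq. apply sqrt_sqrt. generalize s2_bounds (pos_INR q). lra. Qed.

Lemma s_pos : 0 < s_pq p q.
Proof. unfold s_pq. apply sqrt_lt_R0. generalize s2_bounds; lra. Qed.

End Params.

Lemma ln_le_lin x : 0 < x -> ln x <= x - 1.
Proof. intros. generalize (exp_ineq1_le (ln x)). rewrite exp_ln; auto. lra. Qed.

Lemma ln_approx u : -1/2 <= u <= 1/2 -> Rabs (ln (1 + u) - u) <= 2 * (u * u).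
Proof.
  intros Hu. assert (H1 := ln_le_lin (1 + u) ltac:(lra)).
  assert (H2 := ln_le_lin (/ (1 + u)) ltac:(apply Rinv_0_lt_compat; lra)).
  rewrite ln_Rinv in H2 by lra.
  assert (/ (1 + u) - 1 <= u * u - u + u * u).
  { replace (/ (1 + u) - 1) with (- u / (1 + u)) by (field; lra).
    apply Rmult_le_reg_r with (1 + u). lra.
    replace (- u / (1 + u) * (1 + u)) with (- u) by (field; lra). nra. }
  apply Rabs_le. nra.
Qed.

Lemma sq_bound x c : Rabs x <= c -> x * x <= c * c.
Proof. intros H. assert (0 <= Rabs x) by apply Rabs_pos.
  replace (x * x) with (Rabs x * Rabs x). nra.
  rewrite <- Rabs_mult. apply Rabs_pos_eq. nra. Qed.

Lemma abs_le_inv x c : Rabs x <= c -> -c <= x <= c.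
Proof. intros. generalize (Rle_abs x) (Rle_abs (-x)). rewrite Rabs_Ropp. lra. Qed.

Lemma div_le_k x Q k : 0 < Q -> x <= k * Q -> x / Q <= k.
Proof. intros. apply Rmult_le_reg_r with Q. auto.
  replace (x / Q * Q) with x by (field; lra). lra. Qed.

Section Step.
Variables p q : nat.
Hypothesis Hp : 1 <= INR p.
Hypothesis Hpq : INR p <= INR q.

Lemma step_est i D : (i < q)%nat -> 0 <= D -> 8 * (1 + D) <= INR q ->
  Rabs (INR i + 1 - m_pq p q) <= D ->
  Rabs (ln (rr p q i) + (INR i + 1 - m_pq p q) / s2_pq p q)
    <= 4 / INR q + 56 * ((1 + D) * (1 + D)) / (INR q * INR q).
Proof.
  intros Hi HD HQD Hd.
  generalize (m_AB p q Hp Hpq) (m_lb p q Hp Hpq) (A_lb p q Hp Hpq) (inv_s2 p q Hp Hpq) (s2_bounds p q Hp Hpq).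
  intros E1 H1 H2 E2 H3.
  set (m := m_pq p q) in *. set (s2 := s2_pq p q) in *.
  set (Q := INR q) in *. set (P := INR p) in *.
  set (d := INR i + 1 - m) in *.
  set (A := Q - m) in *. set (B := P + m) in *.
  assert (HQ : 0 < Q) by lra.
  assert (HA : 0 < A) by lra. assert (HB : Q / 2 <= B) by (unfold B; lra). assert (Hm : 0 < m) by lra.
  set (a := (1 - d) / A). set (b := d / B). set (e := d / m).
  assert (Ha : Rabs a <= 4 * (1 + D) / Q).
  { unfold a, Rdiv. rewrite Rabs_mult, Rabs_Rinv, (Rabs_pos_eq A) by lra.
    apply Rle_trans with ((1 + D) * / A).
    apply Rmult_le_compat_r. apply Rlt_le, Rinv_0_lt_compat; lra.
    eapply Rle_trans. apply Rabs_triang. rewrite Rabs_R1, Rabs_Ropp. lra.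
    apply Rle_trans with ((1 + D) * / (Q / 4)).
    apply Rmult_le_compat_l. lra. apply Rinv_le_contravar; lra. right. field. lra. }
  assert (Hb : Rabs b <= 2 * D / Q).
  { unfold b, Rdiv. rewrite Rabs_mult, Rabs_Rinv, (Rabs_pos_eq B) by lra.
    apply Rle_trans with (D * / (Q / 2)).
    apply Rmult_le_compat; try lra. apply Rabs_pos. apply Rlt_le, Rinv_0_lt_compat; lra.
    apply Rinv_le_contravar; lra. right. field. lra. }
  assert (He : Rabs e <= 2 * D / Q).
  { unfold e, Rdiv. rewrite Rabs_mult, Rabs_Rinv, (Rabs_pos_eq m) by lra.
    apply Rle_trans with (D * / (Q / 2)).
    apply Rmult_le_compat; try lra. apply Rabs_pos. apply Rlt_le, Rinv_0_lt_compat; lra.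
    apply Rinv_le_contravar; lra. right. field. lra. }
  assert (4 * (1 + D) / Q <= 1 / 2) by (apply div_le_k; lra).
  assert (2 * D / Q <= 1 / 4) by (apply div_le_k; lra).
  assert (Ra : -1/2 <= a <= 1/2) by (apply abs_le_inv in Ha; apply abs_le_inv in Hb; apply abs_le_inv in He; lra).
  assert (Rb : -1/2 <= b <= 1/2) by (apply abs_le_inv in Ha; apply abs_le_inv in Hb; apply abs_le_inv in He; lra).
  assert (Re : -1/2 <= e <= 1/2) by (apply abs_le_inv in Ha; apply abs_le_inv in Hb; apply abs_le_inv in He; lra).
  assert (Er : rr p q i = (1 + a) * (1 + b) * / ((1 + e) * (1 + e))).
  { unfold rr, a, b, e. fold Q P.
    replace (INR i) with (d + m - 1) by (unfold d; ring).
    replace ((1 + (1 - d) / A) * (1 + d / B)) with ((A + 1 - d) * (B + d) / (A * B)) by (field; lra).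
    replace ((1 + d / m) * (1 + d / m)) with ((m + d) * (m + d) / (m * m)) by (field; lra).
    rewrite E1. unfold A, B. field. split. lra.
    unfold d. generalize (pos_INR i). lra. }
  assert (Hln : ln (rr p q i) = ln (1 + a) + ln (1 + b) - 2 * ln (1 + e)).
  { rewrite Er. rewrite ln_mult by (try apply Rinv_0_lt_compat; nra).
    rewrite ln_mult by lra. rewrite ln_Rinv by nra. rewrite ln_mult by lra. ring. }
  assert (Hlin : d / s2 = / A - a - b + 2 * e).
  { unfold a, b, e, Rdiv. rewrite E2. field; repeat split; lra. }
  rewrite Hln, Hlin.
  replace (ln (1 + a) + ln (1 + b) - 2 * ln (1 + e) + (/ A - a - b + 2 * e)) with
    ((ln (1 + a) - a) + (ln (1 + b) - b) - 2 * (ln (1 + e) - e) + / A) by ring.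
  generalize (ln_approx a Ra) (ln_approx b Rb) (ln_approx e Re); intros La Lb Le.
  generalize (sq_bound a _ Ha) (sq_bound b _ Hb) (sq_bound e _ He); intros Sa Sb Se.
  assert (/ A <= 4 / Q).
  { apply Rle_trans with (/ (Q / 4)). apply Rinv_le_contravar; lra. right; field; lra. }
  assert (0 < / A) by (apply Rinv_0_lt_compat; lra).
  assert (E4 : 4 * (1 + D) / Q * (4 * (1 + D) / Q) = 16 * ((1 + D) * (1 + D)) / (Q * Q)) by (field; lra).
  assert (E5 : 2 * D / Q * (2 * D / Q) = 4 * (D * D) / (Q * Q)) by (field; lra).
  assert (E6 : 4 * (D * D) / (Q * Q) <= 4 * ((1 + D) * (1 + D)) / (Q * Q)).
  { unfold Rdiv. apply Rmult_le_compat_r. apply Rlt_le, Rinv_0_lt_compat; nra. nra. }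
  assert (E7 : 56 * ((1 + D) * (1 + D)) / (Q * Q) = 2 * (16 * ((1 + D) * (1 + D)) / (Q * Q)) + 6 * (4 * ((1 + D) * (1 + D)) / (Q * Q))) by (field; lra).
  rewrite E7.
  eapply Rle_trans. apply Rabs_triang.
  eapply Rle_trans. apply Rplus_le_compat_l. rewrite Rabs_pos_eq by lra. apply Rle_refl.
  unfold Rminus. eapply Rle_trans. apply Rplus_le_compat_r. apply Rabs_triang.
  eapply Rle_trans. apply Rplus_le_compat_r. apply Rplus_le_compat_r. apply Rabs_triang.
  rewrite Rabs_Ropp, Rabs_mult, (Rabs_pos_eq 2) by lra.
  unfold Rminus in La, Lb, Le. lra.
Qed.
End Step.

Lemma tel_sum (a : nat -> R) N : sum_f_R0 (fun k => a (S k) - a k) N = a (S N) - a O.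
Proof. induction N. simpl. ring. simpl sum_f_R0. rewrite IHN. ring. Qed.

Lemma pow_le1 r n : 0 <= r <= 1 -> 0 <= r ^ n <= 1.
Proof. intros. induction n; simpl; nra. Qed.

Lemma geo_up (rho : R) U N : 0 <= rho <= 1 ->
  sum_f_R0 (fun k => if Nat.leb U k then rho ^ (k - U) else 0) N * (1 - rho) <= 1.
Proof.
  intros Hr.
  set (a := fun k => if Nat.leb U k then rho ^ (k - U) else 1).
  assert (Ha : forall k, 0 <= a k <= 1).
  { intros k; unfold a. destruct (Nat.leb U k). apply pow_le1; auto. lra. }
  rewrite Rmult_comm, scal_sum.
  replace (sum_f_R0 _ N) with (sum_f_R0 (fun k => - (a (S k) - a k)) N).
  - rewrite <- (Rmult_1_l (sum_f_R0 (fun k => - _) N)).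
    replace (sum_f_R0 (fun k => - (a (S k) - a k)) N) with (- sum_f_R0 (fun k => a (S k) - a k) N).
    rewrite tel_sum. generalize (Ha O) (Ha (S N)). lra.
    rewrite <- (Rmult_1_l (sum_f_R0 (fun k => - _) N)). rewrite scal_sum.
    rewrite <- (Rmult_1_l (sum_f_R0 (fun k => a (S k) - a k) N)).
    rewrite Ropp_mult_distr_l, scal_sum. apply sum_eq. intros; ring.
  - apply sum_eq. intros k _. unfold a.
    destruct (Nat.leb_spec U k); destruct (Nat.leb_spec U (S k)); try lia.
    + replace (S k - U)%nat with (S (k - U)) by lia. simpl. ring.
    + replace U with (S k) by lia. rewrite Nat.sub_diag. simpl. ring.
    + ring.
Qed.

Lemma geo_down (rho : R) L N : 0 <= rho <= 1 ->
  sum_f_R0 (fun k => if Nat.ltb k L then rho ^ (L - k) else 0) N * (1 - rho) <= 1.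
Proof.
  intros Hr.
  set (b := fun k => if Nat.leb k L then rho ^ (L - k) else 1).
  assert (Hb : forall k, 0 <= b k <= 1).
  { intros k; unfold b. destruct (Nat.leb k L). apply pow_le1; auto. lra. }
  rewrite Rmult_comm, scal_sum.
  apply Rle_trans with (sum_f_R0 (fun k => b (S k) - b k) N).
  - apply sum_Rle. intros k _. unfold b.
    destruct (Nat.ltb_spec k L); destruct (Nat.leb_spec k L); destruct (Nat.leb_spec (S k) L); try lia.
    + replace (L - k)%nat with (S (L - S k)) by lia. simpl.
      generalize (pow_le1 rho (L - S k) Hr). set (X := rho ^ (L - S k)). intros HX.
      assert (0 <= X * ((1 - rho) * (1 - rho))) by (apply Rmult_le_pos; nra). nra.
    + replace k with L by lia. rewrite Nat.sub_diag. simpl. lra.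
    + lra.
  - rewrite tel_sum. generalize (Hb O) (Hb (S N)). lra.
Qed.

Section Tails.
Variables p q : nat.

Lemma w_up U j : (U + j <= q)%nat ->
  bweight p q (U + j) <= bweight p q U * rr p q U ^ j.
Proof.
  induction j; intros H.
  - rewrite Nat.add_0_r. simpl. lra.
  - replace (U + S j)%nat with (S (U + j)) by lia.
    rewrite w_step by lia.
    assert (0 < bweight p q (U + j)) by (apply w_pos; lia).
    assert (rr p q (U + j) <= rr p q U) by (apply rr_decr; lia).
    assert (0 < rr p q (U + j)) by (apply rr_pos; lia).
    specialize (IHj ltac:(lia)). simpl.
    apply Rle_trans with (bweight p q (U + j) * rr p q U).
    apply Rmult_le_compat_l; lra.
    replace (bweight p q U * (rr p q U * rr p q U ^ j)) with (bweight p q U * rr p q U ^ j * rr p q U) by ring.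
    apply Rmult_le_compat_r. apply Rlt_le, rr_pos; lia. lra.
Qed.

Lemma w_down L j : (1 <= L)%nat -> (L <= q)%nat -> (j <= L)%nat ->
  bweight p q (L - j) <= bweight p q L * (/ rr p q (L - 1)) ^ j.
Proof.
  intros H1 H2. induction j; intros H.
  - rewrite Nat.sub_0_r. simpl. lra.
  - specialize (IHj ltac:(lia)).
    assert (E : bweight p q (L - j) = bweight p q (L - S j) * rr p q (L - S j)).
    { replace (L - j)%nat with (S (L - S j)) by lia. apply w_step. lia. }
    assert (0 < rr p q (L - S j)) by (apply rr_pos; lia).
    assert (0 < rr p q (L - 1)) by (apply rr_pos; lia).
    assert (rr p q (L - 1) <= rr p q (L - S j)) by (apply rr_decr; lia).
    assert (0 < bweight p q (L - S j)) by (apply w_pos; lia).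
    simpl.
    assert (bweight p q (L - S j) <= bweight p q (L - j) * / rr p q (L - 1)).
    { rewrite E. rewrite Rmult_assoc. rewrite <- (Rmult_1_r (bweight p q (L - S j))) at 1.
      apply Rmult_le_compat_l. lra.
      apply Rmult_le_reg_r with (rr p q (L - 1)). auto.
      rewrite Rmult_assoc, Rinv_l by lra. nra. }
    assert (0 <= / rr p q (L - 1)) by (apply Rlt_le, Rinv_0_lt_compat; auto).
    apply Rle_trans with (bweight p q (L - j) * / rr p q (L - 1)). auto.
    replace (bweight p q L * (/ rr p q (L - 1) * (/ rr p q (L - 1)) ^ j)) with
      (bweight p q L * (/ rr p q (L - 1)) ^ j * / rr p q (L - 1)) by ring.
    apply Rmult_le_compat_r; auto.
Qed.

Lemma tail_up U : (U < q)%nat -> rr p q U < 1 ->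
  sum_f_R0 (fun k => if Nat.leb U k then bweight p q k else 0) q * (1 - rr p q U)
    <= bweight p q U.
Proof.
  intros HU Hr.
  assert (H0 : 0 <= rr p q U) by (apply Rlt_le, rr_pos; lia).
  assert (S1 : sum_f_R0 (fun k => if Nat.leb U k then bweight p q k else 0) q <=
     bweight p q U * sum_f_R0 (fun k => if Nat.leb U k then rr p q U ^ (k - U) else 0) q).
  { rewrite scal_sum. apply sum_Rle. intros k Hk. destruct (Nat.leb_spec U k).
    * assert (bweight p q (U + (k - U)) <= bweight p q U * rr p q U ^ (k - U)) by (apply w_up; lia).
      replace (U + (k - U))%nat with k in * by lia. lra.
    * lra. }
  generalize (geo_up (rr p q U) U q ltac:(lra)). generalize (w_pos p q U ltac:(lia)).
  set (A := sum_f_R0 (fun k => if Nat.leb U k then bweight p q k else 0) q) in *.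
  set (G := sum_f_R0 (fun k => if Nat.leb U k then rr p q U ^ (k - U) else 0) q) in *.
  intros. assert (A * (1 - rr p q U) <= bweight p q U * G * (1 - rr p q U)) by (apply Rmult_le_compat_r; lra).
  nra.
Qed.

Lemma tail_down L : (1 <= L)%nat -> (L <= q)%nat -> 1 < rr p q (L - 1) ->
  sum_f_R0 (fun k => if Nat.ltb k L then bweight p q k else 0) q * (1 - / rr p q (L - 1))
    <= bweight p q L.
Proof.
  intros H1 HL Hr.
  set (rho := / rr p q (L - 1)).
  assert (Hrho : 0 <= rho <= 1).
  { unfold rho. split. apply Rlt_le, Rinv_0_lt_compat; lra.
    rewrite <- Rinv_1. apply Rinv_le_contravar; lra. }
  assert (S1 : sum_f_R0 (fun k => if Nat.ltb k L then bweight p q k else 0) q <=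
     bweight p q L * sum_f_R0 (fun k => if Nat.ltb k L then rho ^ (L - k) else 0) q).
  { rewrite scal_sum. apply sum_Rle. intros k Hk. destruct (Nat.ltb_spec k L).
    * assert (bweight p q (L - (L - k)) <= bweight p q L * rho ^ (L - k)) by (apply w_down; lia).
      replace (L - (L - k))%nat with k in * by lia. lra.
    * lra. }
  generalize (geo_down rho L q Hrho). generalize (w_pos p q L HL).
  set (A := sum_f_R0 (fun k => if Nat.ltb k L then bweight p q k else 0) q) in *.
  set (G := sum_f_R0 (fun k => if Nat.ltb k L then rho ^ (L - k) else 0) q) in *.
  intros. assert (A * (1 - rho) <= bweight p q L * G * (1 - rho)) by (apply Rmult_le_compat_r; lra).
  nra.
Qed.
End Tails.

Definition Gk (m s : R) (k : nat) : R := - (tk m s k ^ 2) / 2.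

Lemma gauss_Gk m s k : gauss (tk m s k) = exp (Gk m s k).
Proof. reflexivity. Qed.

Lemma Gk_step m s i : 0 < s ->
  Gk m s (S i) - Gk m s i = - (INR i + 1 - m) / (s * s) + / (2 * (s * s)).
Proof. intros. unfold Gk, tk. rewrite S_INR. field. lra. Qed.

Lemma exp_err g z d : Rabs z <= d -> Rabs (exp (g + z) - exp g) <= exp g * (exp d - 1).
Proof.
  intros Hz. rewrite exp_plus.
  replace (exp g * exp z - exp g) with (exp g * (exp z - 1)) by ring.
  rewrite Rabs_mult, (Rabs_pos_eq (exp g)) by (apply Rlt_le, exp_pos).
  apply Rmult_le_compat_l. apply Rlt_le, exp_pos.
  apply abs_le_inv in Hz.
  generalize (exp_ineq1_le z) (exp_ineq1_le (- z)); intros E1 E2.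
  assert (exp z * exp (- z) = 1) by (rewrite <- exp_plus; replace (z + - z) with 0 by ring; apply exp_0).
  generalize (exp_pos z) (exp_pos (-z)); intros P1 P2.
  assert (exp z <= exp d) by (apply exp_le; lra).
  assert (exp (- z) <= exp d) by (apply exp_le; lra).
  apply Rabs_le. split; nra.
Qed.

Section Window.
Variables p q : nat.
Hypothesis Hp : 1 <= INR p.
Hypothesis Hpq : INR p <= INR q.

Let m := m_pq p q.
Let s := s_pq p q.

Lemma lw_step i : (i < q)%nat -> ln (bweight p q (S i)) = ln (bweight p q i) + ln (rr p q i).
Proof. intros. rewrite w_step by auto. apply ln_mult. apply w_pos; lia. apply rr_pos; auto. Qed.

Lemma window L U eps0 : (U <= q)%nat ->
  (forall i, (L <= i < U)%nat -> Rabs (ln (rr p q i) + (INR i + 1 - m) / s2_pq p q) <= eps0) ->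
  forall j, (L + j <= U)%nat ->
  Rabs (ln (bweight p q (L + j)) - ln (bweight p q L) - (Gk m s (L + j) - Gk m s L))
    <= INR j * (eps0 + / (2 * s2_pq p q)).
Proof.
  intros HU Hst j. induction j; intros Hj.
  - rewrite Nat.add_0_r. replace (_ - _ - _) with 0 by ring. rewrite Rabs_R0. simpl. lra.
  - specialize (IHj ltac:(lia)).
    replace (L + S j)%nat with (S (L + j)) by lia.
    rewrite lw_step by lia.
    assert (Hs := s_pos p q Hp Hpq). assert (Hss := s_sq p q Hp Hpq). fold s in Hs, Hss.
    assert (E := Gk_step m s (L + j) Hs). rewrite Hss in E.
    specialize (Hst (L + j)%nat ltac:(lia)).
    replace (ln (bweight p q (L + j)) + ln (rr p q (L + j)) - ln (bweight p q L) -
      (Gk m s (S (L + j)) - Gk m s L)) with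
      ((ln (bweight p q (L + j)) - ln (bweight p q L) - (Gk m s (L + j) - Gk m s L))
       + (ln (rr p q (L + j)) + (INR (L + j) + 1 - m) / s2_pq p q - / (2 * s2_pq p q))).
    2:{ replace (Gk m s (S (L + j))) with (Gk m s (L + j) + (- (INR (L + j) + 1 - m) / s2_pq p q + / (2 * s2_pq p q))) by lra.
        unfold Rdiv. ring. }
    eapply Rle_trans. apply Rabs_triang.
    rewrite S_INR.
    assert (0 < / (2 * s2_pq p q)) by (apply Rinv_0_lt_compat; generalize (s2_bounds p q Hp Hpq); lra).
    assert (Rabs (ln (rr p q (L + j)) + (INR (L + j) + 1 - m) / s2_pq p q - / (2 * s2_pq p q)) <= eps0 + / (2 * s2_pq p q)).
    { unfold Rminus. eapply Rle_trans. apply Rabs_triang. rewrite Rabs_Ropp, (Rabs_pos_eq (/ (2 * s2_pq p q))) by lra. unfold Rminus in Hst. lra. }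
    lra.
Qed.
End Window.

Lemma floor_nat r : 0 <= r -> exists k : nat, r - 1 < INR k <= r.
Proof.
  intros Hr. destruct (archimed r) as [H1 H2].
  assert (Hz : (1 <= up r)%Z). { apply le_IZR. assert (IZR (up r) > 0) by lra.
    assert (0 < up r)%Z by (apply lt_IZR; lra). apply IZR_le. lia. }
  exists (Z.to_nat (up r - 1)). rewrite INR_IZR_INZ, Z2Nat.id by lia.
  rewrite minus_IZR. simpl. lra.
Qed.

Lemma gauss_mono a b : 0 <= a <= b -> gauss b <= gauss a.
Proof. intros. unfold gauss. apply exp_le. simpl. nra. Qed.

Lemma gauss_abs t : gauss t = gauss (Rabs t).
Proof. unfold gauss. f_equal. f_equal. simpl. rewrite !Rmult_1_r.
  rewrite <- Rabs_mult. rewrite Rabs_pos_eq. auto. nra. Qed.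

Lemma gauss_inv T : 0 < T -> gauss T <= / T.
Proof.
  intros. unfold gauss. replace (- T ^ 2 / 2) with (- (T ^ 2 / 2)) by field.
  rewrite exp_Ropp. apply Rinv_le_contravar. auto.
  generalize (exp_ineq1_le (T ^ 2 / 2)). simpl. nra.
Qed.

Lemma exp_small d : 0 <= d <= 1/2 -> exp d - 1 <= 2 * d.
Proof.
  intros. generalize (exp_ineq1_le (- d)). intros H1.
  assert (exp d * exp (- d) = 1) by (rewrite <- exp_plus; replace (d + - d) with 0 by ring; apply exp_0).
  generalize (exp_pos d). nra.
Qed.

Lemma one_minus_exp a : 0 <= a <= 1 -> a / 2 <= 1 - exp (- a).
Proof.
  intros. rewrite exp_Ropp. generalize (exp_ineq1_le a) (exp_pos a). intros.
  assert (/ exp a <= / (1 + a)) by (apply Rinv_le_contravar; lra).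
  assert (/ (1 + a) <= 1 - a / 2).
  { apply Rmult_le_reg_r with (1 + a). lra. rewrite Rinv_l by lra. nra. }
  lra.
Qed.

Lemma quot_lemma a b A B eta : Rabs (a - A) <= eta -> Rabs (b - B) <= eta ->
  1 <= B -> 0 <= A <= B -> 0 <= eta <= 1/2 -> Rabs (a / b - A / B) <= 4 * eta.
Proof.
  intros Ha Hb HB HA He. apply abs_le_inv in Ha. apply abs_le_inv in Hb.
  assert (Hb0 : B / 2 <= b) by lra.
  replace (a / b - A / B) with (((a - A) * B - A * (b - B)) / (b * B)) by (field; lra).
  unfold Rdiv. rewrite Rabs_mult, Rabs_Rinv by nra. rewrite (Rabs_pos_eq (b * B)) by nra.
  apply Rmult_le_reg_r with (b * B). nra. rewrite Rmult_assoc, Rinv_l by nra. rewrite Rmult_1_r.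
  assert (Rabs ((a - A) * B - A * (b - B)) <= eta * B + A * eta).
  { unfold Rminus at 1. eapply Rle_trans. apply Rabs_triang. rewrite Rabs_Ropp, !Rabs_mult.
    rewrite (Rabs_pos_eq B), (Rabs_pos_eq A) by lra.
    apply Rplus_le_compat. apply Rmult_le_compat_r. lra. apply Rabs_le; lra.
    apply Rmult_le_compat_l. lra. apply Rabs_le; lra. }
  assert (eta * B + A * eta <= 2 * eta * B) by nra.
  assert (0 <= 2 * eta * B * (2 * b - 1)) by (apply Rmult_le_pos; nra).
  nra.
Qed.

Lemma h_bounds : 2 <= sqrt (2 * PI) <= 3.
Proof.
  generalize PI_4 PI2_3_2; intros. split.
  - apply Rle_trans with (sqrt 4). right; symmetry; apply sqrt_lem_1; lra.
    apply sqrt_le_1_alt. lra.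
  - apply Rle_trans with (sqrt 9). apply sqrt_le_1_alt. lra.
    right; apply sqrt_lem_1; lra.
Qed.

Lemma I_chasles a b c : RInt gauss a b + RInt gauss b c = RInt gauss a c.
Proof. apply (RInt_Chasles (V:=R_CompleteNormedModule)); apply gauss_exRInt. Qed.

Lemma I_0T_bounds T : 0 <= T -> 0 <= RInt gauss 0 T <= 9 / 2.
Proof.
  intros. split. apply RInt_gauss_bounds; auto.
  generalize (Ig_lim T H) h_bounds (gauss_le1 T); intros H1 H2 H3. apply abs_le_inv in H1. lra.
Qed.

Lemma I_bound a b : a <= b -> 0 <= RInt gauss a b <= 9.
Proof.
  intros Hab. split. apply RInt_gauss_bounds; auto.
  set (M := Rabs a + Rabs b).
  assert (HM : - M <= a /\ b <= M).
  { unfold M. generalize (Rle_abs a) (Rle_abs (-a)) (Rle_abs b) (Rle_abs (-b)) (Rabs_pos a) (Rabs_pos b).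
    rewrite !Rabs_Ropp. lra. }
  assert (0 <= M) by (unfold M; generalize (Rabs_pos a) (Rabs_pos b); lra).
  generalize (I_chasles (- M) a b) (I_chasles (- M) b M) (I_chasles (- M) 0 M) (Ig_sym M)
    (RInt_gauss_bounds (- M) a ltac:(lra)) (RInt_gauss_bounds b M ltac:(lra)) (I_0T_bounds M ltac:(lra)).
  lra.
Qed.

Lemma decomp (f : nat -> R) (L U N : nat) : (L <= U)%nat ->
  sum_f_R0 f N = sum_f_R0 (fun k => if Nat.ltb k L then f k else 0) N
     + sum_f_R0 (fun k => if win L U k then f k else 0) N
     + sum_f_R0 (fun k => if Nat.leb U k then f k else 0) N.
Proof.
  intros H. rewrite <- !plus_sum. apply sum_eq. intros k _. unfold win.
  destruct (Nat.ltb_spec k L); destruct (Nat.leb_spec L k); destruct (Nat.ltb_spec k U);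
    destruct (Nat.leb_spec U k); simpl; try lia; ring.
Qed.

Lemma I0x_abs x : Rabs (RInt gauss 0 x) <= Rabs x.
Proof.
  destruct (Rle_or_lt 0 x).
  - generalize (RInt_gauss_bounds 0 x H). intros. rewrite !Rabs_pos_eq; lra.
  - generalize (RInt_gauss_bounds x 0 ltac:(lra)) (I_chasles x 0 x). rewrite RInt_point. unfold zero; simpl.
    intros. rewrite Rabs_left1 by lra. rewrite Rabs_left by lra. lra.
Qed.

Lemma cube_lin T : 2 <= T -> 2 * T + 5 <= (T + 3) ^ 3.
Proof. intros. assert (25 <= (T + 3) * (T + 3)) by nra.
  replace ((T + 3) ^ 3) with ((T + 3) * ((T + 3) * (T + 3))) by ring. nra. Qed.

Lemma main_est p q x T : 1 <= INR p -> INR p <= INR q -> 2 <= T -> Rabs x + 1 <= T ->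
  gauss T <= 1 / 100 -> 1000 * (T + 3) ^ 3 <= s_pq p q ->
  Rabs (norm_cdf p q x - (/ 2 + / sqrt (2 * PI) * RInt gauss 0 x))
    <= (30 + 3 * Rabs x) * gauss T + 900 * (T + 3) ^ 3 / s_pq p q.
Proof.
  intros Hp Hpq HT Hx Hg Hs.
  generalize (s_pos p q Hp Hpq) (s_sq p q Hp Hpq) (s2_bounds p q Hp Hpq)
    (m_lb p q Hp Hpq) (A_lb p q Hp Hpq); intros Hs0 Hss Hs2 Hm HA.
  set (m := m_pq p q) in *. set (s := s_pq p q) in *.
  set (Q := INR q) in *.
  assert (HT3 : 125 <= (T + 3) ^ 3) by (simpl; nra).
  assert (Hs1 : 1000 <= s) by nra.
  assert (HQ : 4 * (s * s) <= Q) by lra.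
  assert (HsT : 1000 * (T + 3) <= s).
  { assert ((T + 3) <= (T + 3) ^ 3) by (simpl; nra). nra. }
  assert (HsTs : T * s + 2 * s <= s * s) by nra.
  assert (HTs : 0 <= T * s) by nra.
  destruct (floor_nat (m - T * s)) as [L [HL1 HL2]]. nra.
  destruct (floor_nat (m + T * s + 1)) as [U [HU1 HU2]]. nra.
  assert (HL0 : (1 <= L)%nat).
  { destruct L. simpl in HL1. nra. lia. }
  assert (HUq : (U < q)%nat). { apply INR_lt. fold Q. lra. }
  assert (HLU : (L <= U)%nat). { apply INR_le. lra. }
  assert (HUL : INR (U - L) <= 2 * (T + 1) * s). { rewrite minus_INR by auto. nra. }
  assert (HtL : - T - 1 / s < tk m s L <= - T).
  { unfold tk. split.
    - apply Rmult_lt_reg_r with s. lra. unfold Rdiv. rewrite Rmult_assoc, Rinv_l by lra.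
      replace ((- T - 1 * / s) * s) with (- T * s - 1) by (field; lra). lra.
    - apply Rmult_le_reg_r with s. lra. unfold Rdiv. rewrite Rmult_assoc, Rinv_l by lra. lra. }
  assert (HtU : T < tk m s U <= T + 1 / s).
  { unfold tk. split.
    - apply Rmult_lt_reg_r with s. lra. unfold Rdiv. rewrite Rmult_assoc, Rinv_l by lra. lra.
    - apply Rmult_le_reg_r with s. lra. unfold Rdiv. rewrite Rmult_assoc, Rinv_l by lra.
      replace ((T + 1 * / s) * s) with (T * s + 1) by (field; lra). lra. }
  assert (HsTs2 : 1000 * (T + 3) * s <= s * s) by (apply Rmult_le_compat_r; lra).
  set (e0 := 4 * (T + 3) ^ 2 / (s * s)).
  assert (Hstep : forall i, (i < q)%nat -> (L <= S i)%nat -> (i <= U)%nat ->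
            Rabs (ln (rr p q i) + (INR i + 1 - m) / s2_pq p q) <= e0).
  { intros i Hi1 Hi2 Hi3.
    apply le_INR in Hi2. apply le_INR in Hi3. rewrite S_INR in Hi2.
    assert (HD : Rabs (INR i + 1 - m) <= T * s + 2) by (apply Rabs_le; lra).
    eapply Rle_trans. apply (step_est p q Hp Hpq i (T * s + 2)); auto. lra. fold Q. lra.
    fold Q m. unfold e0.
    set (Y := s * s) in *.
    assert (HY : 1000 <= Y) by lra.
    assert (E1 : 4 / Q <= 1 / Y) by (apply div_le; lra).
    assert (HD1 : 0 <= T * s + 3 <= (T + 3) * s) by lra.
    assert (HD2 : (1 + (T * s + 2)) * (1 + (T * s + 2)) <= (T + 3) ^ 2 * Y).
    { replace ((T + 3) ^ 2 * Y) with (((T + 3) * s) * ((T + 3) * s)) by (unfold Y; ring).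
      replace (1 + (T * s + 2)) with (T * s + 3) by ring.
      apply Rmult_le_compat; lra. }
    assert (HT2 : 0 <= (T + 3) ^ 2) by (apply pow_le; lra).
    assert (E2 : 56 * ((1 + (T * s + 2)) * (1 + (T * s + 2))) / (Q * Q) <= 7 / 2 * (T + 3) ^ 2 / Y).
    { apply div_le. apply Rmult_lt_0_compat; lra. lra.
      assert (HQQ : 16 * (Y * Y) <= Q * Q) by (replace (16 * (Y * Y)) with ((4 * Y) * (4 * Y)) by ring; apply Rmult_le_compat; lra).
      apply Rle_trans with (56 * ((T + 3) ^ 2 * Y) * Y).
      apply Rmult_le_compat_r. lra. apply Rmult_le_compat_l. lra. auto.
      replace (56 * ((T + 3) ^ 2 * Y) * Y) with (7 / 2 * (T + 3) ^ 2 * (16 * (Y * Y))) by field.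
      apply Rmult_le_compat_l. lra. auto. }
    assert (E3 : 1 / Y + 7 / 2 * (T + 3) ^ 2 / Y <= 4 * (T + 3) ^ 2 / Y).
    { apply Rmult_le_reg_r with Y. lra.
      replace ((1 / Y + 7 / 2 * (T + 3) ^ 2 / Y) * Y) with (1 + 7 / 2 * (T + 3) ^ 2) by (field; lra).
      replace (4 * (T + 3) ^ 2 / Y * Y) with (4 * (T + 3) ^ 2) by (field; lra).
      assert (25 <= (T + 3) ^ 2) by (replace 25 with (5 * 5) by ring; simpl; rewrite Rmult_1_r; apply Rmult_le_compat; lra). lra. }
    lra. }
  assert (He0 : 0 <= e0) by (unfold e0; apply Rle_mult_inv_pos; [apply Rmult_le_pos; [lra|apply pow_le; lra]|nra]).
  set (dl := INR (U - L) * (e0 + / (2 * s2_pq p q))).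
  assert (Hdl0 : 0 <= dl).
  { unfold dl. apply Rmult_le_pos. apply pos_INR. rewrite <- Hss.
    assert (0 < / (2 * (s * s))) by (apply Rinv_0_lt_compat; nra). lra. }
  assert (Hdl : dl <= 10 * (T + 3) ^ 3 / s).
  { unfold dl, e0. rewrite <- Hss.
    replace (4 * (T + 3) ^ 2 / (s * s) + / (2 * (s * s))) with ((4 * (T + 3) ^ 2 + 1/2) / (s * s)) by (field; lra).
    apply Rle_trans with (2 * (T + 1) * s * ((4 * (T + 3) ^ 2 + 1 / 2) / (s * s))).
    apply Rmult_le_compat_r. apply Rle_mult_inv_pos. assert (0 <= (T+3)^2) by (apply pow_le; lra). lra. nra. auto.
    replace (2 * (T + 1) * s * ((4 * (T + 3) ^ 2 + 1 / 2) / (s * s))) with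
      (2 * (T + 1) * (4 * (T + 3) ^ 2 + 1 / 2) / s) by (field; lra).
    apply div_le. lra. lra. apply Rmult_le_compat_r. lra.
    assert (25 <= (T + 3) ^ 2) by (replace 25 with (5 * 5) by ring; simpl; rewrite Rmult_1_r; apply Rmult_le_compat; lra).
    replace (10 * (T + 3) ^ 3) with (2 * (T + 3) * (5 * (T + 3) ^ 2)) by (simpl; ring).
    apply Rmult_le_compat. lra. lra. lra. lra. }
  assert (Hdl2 : dl <= 1 / 100).
  { eapply Rle_trans. apply Hdl. apply div_le_k. lra. lra. }
  assert (HWin : forall j, (L + j <= U)%nat ->
     Rabs (ln (bweight p q (L + j)) - ln (bweight p q L) - (Gk m s (L + j) - Gk m s L)) <= dl).
  { intros j Hj. eapply Rle_trans. apply (window p q Hp Hpq L U e0). lia.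
    intros i Hi. apply Hstep; lia. auto. unfold dl.
    apply Rmult_le_compat_r. rewrite <- Hss. assert (0 < / (2 * (s * s))) by (apply Rinv_0_lt_compat; nra). lra.
    apply le_INR. lia. }
  set (K := ln (bweight p q L) - Gk m s L).
  assert (HwK : forall k, (L <= k <= U)%nat ->
     Rabs (bweight p q k * exp (- K) - gauss (tk m s k)) <= gauss (tk m s k) * (exp dl - 1)).
  { intros k Hk. specialize (HWin (k - L)%nat ltac:(lia)). replace (L + (k - L))%nat with k in HWin by lia.
    rewrite gauss_Gk.
    replace (bweight p q k * exp (- K)) with
      (exp (Gk m s k + (ln (bweight p q k) - ln (bweight p q L) - (Gk m s k - Gk m s L)))).
    apply exp_err; auto.
    rewrite <- (exp_ln (bweight p q k)) at 2 by (apply w_pos; lia).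
    rewrite <- exp_plus. f_equal. unfold K. ring. }
  assert (HwU : bweight p q U <= exp K * gauss T * 2).
  { specialize (HwK U ltac:(lia)). apply abs_le_inv in HwK.
    assert (exp dl <= 2) by (generalize (exp_small dl ltac:(lra)); lra).
    assert (gauss (tk m s U) <= gauss T) by (apply gauss_mono; lra).
    assert (0 < gauss (tk m s U)) by apply gauss_pos.
    assert (bweight p q U * exp (- K) <= gauss T * 2) by nra.
    rewrite exp_Ropp in H2. generalize (exp_pos K). intros.
    apply Rmult_le_reg_r with (/ exp K). apply Rinv_0_lt_compat; auto.
    replace (exp K * gauss T * 2 * / exp K) with (gauss T * 2) by (field; lra). auto. }
  assert (HwL : bweight p q L <= exp K * gauss T).
  { assert (E : bweight p q L = exp K * gauss (tk m s L)).
    { rewrite gauss_Gk, <- exp_plus. unfold K. rewrite <- (exp_ln (bweight p q L)) at 1 by (apply w_pos; lia).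
      f_equal. ring. }
    rewrite E. apply Rmult_le_compat_l. apply Rlt_le, exp_pos.
    rewrite gauss_abs. apply gauss_mono. split. lra.
    rewrite Rabs_left1 by lra. lra. }
  set (a := T / (2 * s)).
  assert (Ha : 0 < a <= 1) by (unfold a; split; [apply Rdiv_lt_0_compat; lra | apply div_le_k; lra]).
  assert (He0a : e0 <= a).
  { unfold e0, a. apply div_le. apply Rmult_lt_0_compat; lra. lra.
    assert (HT2 : (T + 3) ^ 2 <= (T + 3) ^ 3).
    { replace ((T + 3) ^ 3) with ((T + 3) * (T + 3) ^ 2) by ring.
      rewrite <- (Rmult_1_l ((T + 3) ^ 2)) at 1. apply Rmult_le_compat_r. apply pow_le; lra. lra. }
    assert (2 * s <= T * s) by (apply Rmult_le_compat_r; lra).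
    assert (8 * (T + 3) ^ 2 <= T * s) by lra.
    apply Rle_trans with (4 * (T + 3) ^ 2 * (2 * s)). lra.
    replace (4 * (T + 3) ^ 2 * (2 * s)) with (8 * (T + 3) ^ 2 * s) by ring.
    replace (T * (s * s)) with ((T * s) * s) by ring.
    apply Rmult_le_compat_r; lra. }
  assert (HaT : a * 2 * s = T) by (unfold a; field; lra).
  set (Tu := sum_f_R0 (fun k => if Nat.leb U k then bweight p q k else 0) q).
  set (Tl := sum_f_R0 (fun k => if Nat.ltb k L then bweight p q k else 0) q).
  assert (HTu0 : 0 <= Tu).
  { unfold Tu. apply cond_pos_sum. intros k. destruct (Nat.leb U k). 2: lra.
    apply Rlt_le, w_pos_all. }
  assert (HTl0 : 0 <= Tl).
  { unfold Tl. apply cond_pos_sum. intros k. destruct (Nat.ltb_spec k L). 2: lra.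
    apply Rlt_le, w_pos; lia. }
  assert (HTu : Tu <= 4 * s * exp K * gauss T).
  { assert (H1 := Hstep U HUq ltac:(lia) ltac:(lia)). apply abs_le_inv in H1.
    rewrite <- Hss in H1.
    assert (H2 : (INR U + 1 - m) / (s * s) >= a * 2).
    { unfold a. apply Rle_ge. apply Rmult_le_reg_r with (s * s). nra.
      replace ((INR U + 1 - m) / (s * s) * (s * s)) with (INR U + 1 - m) by (field; lra).
      replace (T / (2 * s) * 2 * (s * s)) with (T * s) by (field; lra). lra. }
    assert (H3 : rr p q U <= exp (- a)).
    { rewrite <- (exp_ln (rr p q U)) by (apply rr_pos; auto). apply exp_le. lra. }
    assert (H4 := one_minus_exp a ltac:(lra)).
    assert (H5 := tail_up p q U HUq ltac:(generalize (exp_pos a); rewrite exp_Ropp in *;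
       assert (1 < exp a) by (generalize (exp_ineq1 a); lra);
       assert (/ exp a < 1) by (rewrite <- Rinv_1; apply Rinv_lt_contravar; lra); lra)).
    fold Tu in H5.
    assert (H6 : Tu * (a / 2) <= bweight p q U).
    { eapply Rle_trans. 2: apply H5. apply Rmult_le_compat_l. lra. lra. }
    assert (H7 : Tu * (a / 2) <= exp K * gauss T * 2) by lra.
    apply Rmult_le_reg_r with (a / 2). lra.
    replace (4 * s * exp K * gauss T * (a / 2)) with (exp K * gauss T * (a * 2 * s)) by field.
    rewrite HaT. generalize (exp_pos K) (gauss_pos T). intros.
    assert (exp K * gauss T * 2 <= exp K * gauss T * T) by (apply Rmult_le_compat_l; [apply Rmult_le_pos|]; lra).
    lra. }
  assert (HTl : Tl <= 2 * s * exp K * gauss T).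
  { assert (H1 := Hstep (L - 1)%nat ltac:(lia) ltac:(lia) ltac:(lia)). apply abs_le_inv in H1.
    rewrite <- Hss in H1. rewrite minus_INR in H1 by lia. simpl INR in H1.
    replace (INR L - 1 + 1 - m) with (INR L - m) in H1 by ring.
    assert (H2 : - (INR L - m) / (s * s) >= a * 2).
    { unfold a. apply Rle_ge. apply Rmult_le_reg_r with (s * s). apply Rmult_lt_0_compat; lra.
      replace (- (INR L - m) / (s * s) * (s * s)) with (- (INR L - m)) by (field; lra).
      replace (T / (2 * s) * 2 * (s * s)) with (T * s) by (field; lra). lra. }
    assert (H2' : (INR L - m) / (s * s) = - (- (INR L - m) / (s * s))) by (field; lra).
    assert (H3 : exp a <= rr p q (L - 1)).
    { rewrite <- (exp_ln (rr p q (L - 1))) by (apply rr_pos; lia). apply exp_le. lra. }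
    assert (H3' : 1 < rr p q (L - 1)) by (generalize (exp_ineq1 a); lra).
    assert (H4 := one_minus_exp a ltac:(lra)).
    assert (H3'' : / rr p q (L - 1) <= exp (- a)).
    { rewrite exp_Ropp. apply Rinv_le_contravar. apply exp_pos. auto. }
    assert (H5 := tail_down p q L HL0 ltac:(lia) H3'). fold Tl in H5.
    assert (H6 : Tl * (a / 2) <= bweight p q L).
    { eapply Rle_trans. 2: apply H5. apply Rmult_le_compat_l. lra. lra. }
    apply Rmult_le_reg_r with (a / 2). lra.
    replace (2 * s * exp K * gauss T * (a / 2)) with (exp K * gauss T * (a * 2 * s) / 2) by field.
    rewrite HaT. generalize (exp_pos K) (gauss_pos T). intros.
    assert (exp K * gauss T <= exp K * gauss T * T / 2).
    { replace (exp K * gauss T * T / 2) with (exp K * gauss T * (T / 2)) by field.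
      rewrite <- (Rmult_1_r (exp K * gauss T)) at 1. apply Rmult_le_compat_l. apply Rmult_le_pos; lra. lra. }
    lra. }
  set (E := s * exp K).
  assert (HE : 0 < E) by (unfold E; apply Rmult_lt_0_compat; [lra|apply exp_pos]).
  assert (Hexp : exp dl - 1 <= 2 * dl) by (apply exp_small; lra).
  assert (Hexp0 : 0 <= exp dl - 1) by (generalize (exp_ineq1_le dl); lra).
  assert (HrR : INR (U - L) / (s * s) + 1 / s <= (2 * T + 3) / s).
  { replace ((2 * T + 3) / s) with (2 * (T + 1) * s / (s * s) + 1 / s) by (field; lra).
    apply Rplus_le_compat_r. unfold Rdiv. apply Rmult_le_compat_r.
    apply Rlt_le, Rinv_0_lt_compat, Rmult_lt_0_compat; lra. auto. }
  assert (HrR1 : (2 * T + 3) / s <= 1 / 100).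
  { apply div_le_k. lra.
    assert ((2 * T + 5) <= (T + 3) ^ 3) by (apply cube_lin; lra).
    lra. }
  assert (HV : forall b, tk m s L <= b <= tk m s U ->
    Rabs (sum_f_R0 (fun k => if win L U k then (if Rle_dec (tk m s k) b then bweight p q k else 0) else 0) q / E
          - RInt gauss (tk m s L) b) <= 10 * (exp dl - 1) + (2 * T + 3) / s).
  { intros b Hb.
    assert (HR := riemann m s b L U q Hs0 HLU ltac:(lia) Hb).
    set (R := sum_f_R0 (rterm m s b L U) q) in *.
    assert (HRb : R <= 10).
    { apply abs_le_inv in HR. generalize (I_bound (tk m s L) b ltac:(lra)). lra. }
    assert (HR0 : 0 <= R).
    { unfold R. apply cond_pos_sum. intros k. unfold rterm. destruct (win L U k). 2: lra.
      destruct (Rle_dec _ _). 2: lra. apply Rlt_le, Rdiv_lt_0_compat. apply gauss_pos. lra. }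
    assert (HVR : Rabs (sum_f_R0 (fun k => if win L U k then (if Rle_dec (tk m s k) b then bweight p q k else 0) else 0) q / E - R)
              <= (exp dl - 1) * R).
    { unfold Rdiv. rewrite Rmult_comm, scal_sum. unfold R. rewrite <- minus_sum.
      eapply Rle_trans. apply Rsum_abs. rewrite scal_sum. apply sum_Rle. intros k Hk.
      unfold rterm. destruct (win L U k) eqn:Ew.
      - unfold win in Ew. apply andb_prop in Ew. destruct Ew as [Ew1 Ew2].
        apply Nat.leb_le in Ew1. apply Nat.ltb_lt in Ew2.
        destruct (Rle_dec (tk m s k) b).
        + specialize (HwK k ltac:(lia)).
          replace (bweight p q k * / E - gauss (tk m s k) / s) with
            ((bweight p q k * exp (- K) - gauss (tk m s k)) / s).
          2:{ unfold E. rewrite exp_Ropp. field. generalize (exp_pos K); intros; split; lra. }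
          unfold Rdiv. rewrite Rabs_mult, (Rabs_pos_eq (/ s)) by (apply Rlt_le, Rinv_0_lt_compat; lra).
          replace (gauss (tk m s k) * / s * (exp dl - 1)) with (gauss (tk m s k) * (exp dl - 1) * / s) by ring.
          apply Rmult_le_compat_r. apply Rlt_le, Rinv_0_lt_compat; lra. auto.
        + rewrite Rmult_0_l, Rminus_0_r, Rabs_R0, Rmult_0_l. lra.
      - rewrite Rmult_0_l, Rminus_0_r, Rabs_R0, Rmult_0_l. lra. }
    apply Rle_trans with ((exp dl - 1) * R + (INR (U - L) / (s * s) + 1 / s)).
    - replace (sum_f_R0 (fun k => if win L U k then (if Rle_dec (tk m s k) b then bweight p q k else 0) else 0) q / E
          - RInt gauss (tk m s L) b) with
        ((sum_f_R0 (fun k => if win L U k then (if Rle_dec (tk m s k) b then bweight p q k else 0) else 0) q / E - R)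
          + (R - RInt gauss (tk m s L) b)) by ring.
      eapply Rle_trans. apply Rabs_triang. lra.
    - assert ((exp dl - 1) * R <= (exp dl - 1) * 10) by (apply Rmult_le_compat_l; lra). lra. }
  set (X := sum_f_R0 (fun k => if Rle_dec (tk m s k) x then bweight p q k else 0) q).
  set (W := sum_f_R0 (bweight p q) q).
  assert (HW0 : 0 < W) by (unfold W; apply tech1; intros; apply w_pos_all).
  assert (Hcdf : norm_cdf p q x = X / W).
  { unfold norm_cdf, X, W. fold (bnorm p q). unfold Rdiv. rewrite Rmult_comm, scal_sum.
    apply sum_eq. intros k _. unfold bprob, tk. fold m s.
    destruct (Rle_dec _ _); unfold Rdiv; ring. }
  assert (HtLx : tk m s L <= x <= tk m s U).
  { generalize (Rle_abs x) (Rle_abs (- x)). rewrite Rabs_Ropp. intros. lra. }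
  assert (HtLU : tk m s L <= tk m s U <= tk m s U) by lra.
  assert (HX : Rabs (X / E - RInt gauss (tk m s L) x) <= 6 * gauss T + 10 * (exp dl - 1) + (2 * T + 3) / s).
  { assert (D := decomp (fun k => if Rle_dec (tk m s k) x then bweight p q k else 0) L U q HLU).
    fold X in D.
    set (X1 := sum_f_R0 (fun k => if Nat.ltb k L then (if Rle_dec (tk m s k) x then bweight p q k else 0) else 0) q) in D.
    set (X3 := sum_f_R0 (fun k => if Nat.leb U k then (if Rle_dec (tk m s k) x then bweight p q k else 0) else 0) q) in D.
    assert (H1 : 0 <= X1 <= Tl).
    { unfold X1, Tl. split. apply cond_pos_sum. intros k. generalize (w_pos_all p q k). intros.
      destruct (Nat.ltb k L); [destruct (Rle_dec _ _)|]; lra.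
      apply sum_Rle. intros k _. generalize (w_pos_all p q k). intros.
      destruct (Nat.ltb k L); [destruct (Rle_dec _ _)|]; lra. }
    assert (H3 : 0 <= X3 <= Tu).
    { unfold X3, Tu. split. apply cond_pos_sum. intros k. generalize (w_pos_all p q k). intros.
      destruct (Nat.leb U k); [destruct (Rle_dec _ _)|]; lra.
      apply sum_Rle. intros k _. generalize (w_pos_all p q k). intros.
      destruct (Nat.leb U k); [destruct (Rle_dec _ _)|]; lra. }
    assert (H2 := HV x HtLx).
    assert (H4 : (X1 + X3) / E <= 6 * gauss T).
    { apply div_le_k. auto. unfold E. generalize (exp_pos K) (gauss_pos T). intros.
      assert (6 * gauss T * (s * exp K) = 4 * s * exp K * gauss T + 2 * s * exp K * gauss T) by ring. lra. }
    assert (H5 : 0 <= (X1 + X3) / E) by (apply Rle_mult_inv_pos; lra).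
    rewrite D. replace ((X1 + sum_f_R0 (fun k => if win L U k then (if Rle_dec (tk m s k) x then bweight p q k else 0) else 0) q + X3) / E
       - RInt gauss (tk m s L) x) with
     ((X1 + X3) / E + (sum_f_R0 (fun k => if win L U k then (if Rle_dec (tk m s k) x then bweight p q k else 0) else 0) q / E
       - RInt gauss (tk m s L) x)) by (field; lra).
    eapply Rle_trans. apply Rabs_triang. rewrite Rabs_pos_eq by auto. lra. }
  assert (HWb : Rabs (W / E - RInt gauss (tk m s L) (tk m s U)) <= 6 * gauss T + 10 * (exp dl - 1) + (2 * T + 3) / s).
  { assert (D := decomp (bweight p q) L U q HLU). fold W Tl Tu in D.
    assert (H2 := HV (tk m s U) HtLU).
    assert (Ew : sum_f_R0 (fun k => if win L U k then bweight p q k else 0) q =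
        sum_f_R0 (fun k => if win L U k then (if Rle_dec (tk m s k) (tk m s U) then bweight p q k else 0) else 0) q).
    { apply sum_eq. intros k _. destruct (win L U k) eqn:Ew. 2: auto.
      unfold win in Ew. apply andb_prop in Ew. destruct Ew as [_ Ew2]. apply Nat.ltb_lt in Ew2.
      destruct (Rle_dec _ _) as [|n]. auto. exfalso. apply n. apply tk_le; [lra|lia]. }
    rewrite Ew in D.
    assert (H4 : (Tl + Tu) / E <= 6 * gauss T).
    { apply div_le_k. auto. unfold E. generalize (exp_pos K) (gauss_pos T). intros.
      assert (6 * gauss T * (s * exp K) = 4 * s * exp K * gauss T + 2 * s * exp K * gauss T) by ring. lra. }
    assert (H5 : 0 <= (Tl + Tu) / E) by (apply Rle_mult_inv_pos; lra).
    rewrite D. replace ((Tl + sum_f_R0 (fun k => if win L U k then (if Rle_dec (tk m s k) (tk m s U) then bweight p q k else 0) else 0) q + Tu) / E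
       - RInt gauss (tk m s L) (tk m s U)) with
     ((Tl + Tu) / E + (sum_f_R0 (fun k => if win L U k then (if Rle_dec (tk m s k) (tk m s U) then bweight p q k else 0) else 0) q / E
       - RInt gauss (tk m s L) (tk m s U))) by (field; lra).
    eapply Rle_trans. apply Rabs_triang. rewrite Rabs_pos_eq by auto. lra. }
  set (eta := 6 * gauss T + 20 * dl + (2 * T + 5) / s).
  assert (HI1 : 0 <= RInt gauss (tk m s L) (- T) <= 1 / s).
  { generalize (RInt_gauss_bounds (tk m s L) (- T) ltac:(lra)). lra. }
  assert (HI2 : 0 <= RInt gauss T (tk m s U) <= 1 / s).
  { generalize (RInt_gauss_bounds T (tk m s U) ltac:(lra)). lra. }
  assert (Hs5 : (2 * T + 5) / s = (2 * T + 3) / s + 1 / s + 1 / s) by (field; lra).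
  assert (HXa : Rabs (X / E - RInt gauss (- T) x) <= eta).
  { rewrite <- (I_chasles (tk m s L) (- T) x) in HX.
    apply abs_le_inv in HX. apply Rabs_le. unfold eta. lra. }
  assert (HWa : Rabs (W / E - RInt gauss (- T) T) <= eta).
  { rewrite <- (I_chasles (tk m s L) (- T) (tk m s U)), <- (I_chasles (- T) T (tk m s U)) in HWb.
    apply abs_le_inv in HWb. apply Rabs_le. unfold eta. lra. }
  set (J := RInt gauss 0 T).
  set (y := RInt gauss 0 x).
  set (h := sqrt (2 * PI) / 2).
  assert (Hh : 1 <= h <= 3 / 2) by (unfold h; generalize h_bounds; lra).
  assert (HJ : Rabs (J - h) <= 3 * gauss T) by (unfold J, h; apply Ig_lim; lra).
  apply abs_le_inv in HJ.
  assert (HB : RInt gauss (- T) T = 2 * J).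
  { rewrite <- (I_chasles (- T) 0 T). rewrite Ig_sym. unfold J. change (@eq R (RInt gauss 0 T + RInt gauss 0 T) (2 * RInt gauss 0 T)). ring. }
  assert (HA' : RInt gauss (- T) x = J + y).
  { rewrite <- (I_chasles (- T) 0 x). rewrite Ig_sym. reflexivity. }
  assert (HA0 : 0 <= RInt gauss (- T) x) by (apply RInt_gauss_bounds; generalize (Rle_abs (- x)); rewrite Rabs_Ropp; lra).
  assert (HAB : RInt gauss (- T) x <= RInt gauss (- T) T).
  { rewrite <- (I_chasles (- T) x T). generalize (RInt_gauss_bounds x T ltac:(generalize (Rle_abs x); lra)). lra. }
  assert (Heta : 0 <= eta <= 1 / 2).
  { unfold eta. assert (0 <= (2 * T + 5) / s) by (apply Rle_mult_inv_pos; lra).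
    generalize (gauss_pos T). intros. assert (1 / s <= 1 / 1000) by (apply div_le; lra). split. lra. lra. }
  assert (HQ1 := quot_lemma (X / E) (W / E) (RInt gauss (- T) x) (RInt gauss (- T) T) eta HXa HWa
     ltac:(lra) ltac:(lra) Heta).
  replace (X / E / (W / E)) with (X / W) in HQ1 by (field; lra).
  rewrite <- Hcdf in HQ1. rewrite HA', HB in HQ1.
  assert (Hphi : Rabs ((J + y) / (2 * J) - (/ 2 + / sqrt (2 * PI) * y)) <= 3 * Rabs x * gauss T).
  { replace (/ sqrt (2 * PI)) with (/ (2 * h)) by (unfold h; field; generalize h_bounds; lra).
    replace ((J + y) / (2 * J) - (/ 2 + / (2 * h) * y)) with (y * (h - J) / (2 * J * h)) by (field; lra).
    unfold Rdiv. rewrite !Rabs_mult. rewrite (Rabs_pos_eq (/ (2 * J * h))).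
    2: { apply Rlt_le, Rinv_0_lt_compat. apply Rmult_lt_0_compat; lra. }
    assert (Hy : Rabs y <= Rabs x) by apply I0x_abs.
    assert (Hhj : Rabs (h - J) <= 3 * gauss T) by (apply Rabs_le; lra).
    assert (Hinv : / (2 * J * h) <= 1).
    { rewrite <- Rinv_1. apply Rinv_le_contravar. lra. assert (0.9 <= J) by lra. nra. }
    assert (0 <= / (2 * J * h)) by (apply Rlt_le, Rinv_0_lt_compat; apply Rmult_lt_0_compat; lra).
    apply Rle_trans with (Rabs x * (3 * gauss T) * 1).
    apply Rmult_le_compat. apply Rmult_le_pos; apply Rabs_pos. auto.
    apply Rmult_le_compat; try apply Rabs_pos; auto. auto. lra. }
  apply Rle_trans with (4 * eta + 3 * Rabs x * gauss T).
  { replace (norm_cdf p q x - (/ 2 + / sqrt (2 * PI) * y)) with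
      ((norm_cdf p q x - (J + y) / (2 * J)) + ((J + y) / (2 * J) - (/ 2 + / sqrt (2 * PI) * y))) by ring.
    eapply Rle_trans. apply Rabs_triang. lra. }
  unfold eta.
  assert (H20 : 20 * dl <= 200 * (T + 3) ^ 3 / s).
  { replace (200 * (T + 3) ^ 3 / s) with (20 * (10 * (T + 3) ^ 3 / s)) by (field; lra). lra. }
  assert (H25 : (2 * T + 5) / s <= (T + 3) ^ 3 / s).
  { apply Rmult_le_compat_r. apply Rlt_le, Rinv_0_lt_compat; lra.
    apply cube_lin; auto. }
  assert (E9 : 900 * (T + 3) ^ 3 / s = 4 * (200 * (T + 3) ^ 3 / s) + 4 * ((T + 3) ^ 3 / s) + 96 * ((T + 3) ^ 3 / s)) by (field; lra).
  assert (0 <= (T + 3) ^ 3 / s) by (apply Rle_mult_inv_pos; lra).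
  generalize (gauss_pos T) (Rabs_pos x). intros. nra.
Qed.

Theorem mainTheorem11 (c : R) (hc : 1 <= c) :
  forall (x : R) (pr : Riemann_integrable gauss 0 x),
  forall eps : R, 0 < eps ->
  exists N : nat, forall n q : nat,
    (N <= n)%nat -> (0 < n)%nat -> INR q = c * INR n ->
    Rabs (norm_cdf n q x - (/ 2 + / sqrt (2 * PI) * RiemannInt pr)) < eps.
Proof.
  intros x pr eps Heps.
  rewrite <- (RInt_Reals gauss 0 x pr).
  set (cx := 30 + 3 * Rabs x).
  assert (Hcx : 30 <= cx) by (unfold cx; generalize (Rabs_pos x); lra).
  set (T := Rabs x + 102 + 2 * cx / eps).
  assert (Hce : 0 < 2 * cx / eps) by (apply Rdiv_lt_0_compat; lra).
  assert (HT : 102 <= T) by (unfold T; generalize (Rabs_pos x); lra).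
  assert (Hg : gauss T <= / T) by (apply gauss_inv; lra).
  assert (Hg1 : gauss T <= 1 / 100).
  { apply Rle_trans with (/ T). auto. unfold Rdiv. rewrite Rmult_1_l. apply Rinv_le_contravar; lra. }
  assert (Hg2 : cx * gauss T < eps / 2).
  { apply Rle_lt_trans with (cx * / T). apply Rmult_le_compat_l; lra.
    apply Rmult_lt_reg_r with T. lra. rewrite Rmult_assoc, Rinv_l, Rmult_1_r by lra.
    assert (2 * cx / eps < T) by (unfold T; generalize (Rabs_pos x); lra).
    assert (cx < eps / 2 * T).
    { apply Rmult_lt_compat_l with (r := eps / 2) in H. 2: lra.
      replace (eps / 2 * (2 * cx / eps)) with cx in H by (field; lra). lra. }
    lra. }
  set (Z := (T + 3) ^ 3).
  assert (HZ : 0 < Z) by (unfold Z; apply pow_lt; lra).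
  set (S0 := 1000 * Z + 1800 * Z / eps).
  assert (HS0 : 0 < S0) by (unfold S0; assert (0 < 1800 * Z / eps) by (apply Rdiv_lt_0_compat; lra); lra).
  destruct (INR_archimed 1 (12 * (S0 * S0)) ltac:(lra)) as [N HN].
  rewrite Rmult_1_r in HN.
  exists N. intros n q HnN Hn0 Hq.
  assert (Hn1 : 1 <= INR n) by (apply (le_INR 1); lia).
  assert (Hnq : INR n <= INR q) by (rewrite Hq; nra).
  assert (HnN' : INR N <= INR n) by (apply le_INR; auto).
  generalize (s_sq n q Hn1 Hnq) (s2_bounds n q Hn1 Hnq) (s_pos n q Hn1 Hnq). intros Hss Hs2 Hs0.
  assert (HS : S0 < s_pq n q).
  { assert (S0 * S0 < s_pq n q * s_pq n q) by lra.
    destruct (Rle_or_lt (s_pq n q) S0) as [Hle|]; auto.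
    assert (s_pq n q * s_pq n q <= S0 * S0) by (apply Rmult_le_compat; lra). lra. }
  assert (H1 := main_est n q x T Hn1 Hnq ltac:(lra) ltac:(unfold T; lra) Hg1
                  ltac:(fold Z; unfold S0 in HS; assert (0 < 1800 * Z / eps) by (apply Rdiv_lt_0_compat; lra); lra)).
  fold cx Z in H1.
  assert (H2 : 900 * Z / s_pq n q <= eps / 2).
  { apply div_le_k. lra.
    assert (1800 * Z / eps < s_pq n q) by (unfold S0 in HS; lra).
    apply Rmult_lt_compat_l with (r := eps / 2) in H. 2: lra.
    replace (eps / 2 * (1800 * Z / eps)) with (900 * Z) in H by (field; lra). lra. }
  lra.
Qed.
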